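(* In the setting described in the context, suppose there exists $(z_1,\dots,z_m)\in\boldsymbol{\mathcal H}$ with $-\big(\nabla_1\boldsymbol g_1(z_1,\dots,z_m),\dots,\nabla_m\boldsymbol g_m(z_1,\dots,z_m)\big)\in\partial\boldsymbol f(z_1,\dots,z_m)$, and there exists $\chi\in]0,+\infty[$ such that for all $(x_i),(y_i)\in\boldsymbol{\mathcal H}$, $$\sum_{i=1}^m\|\nabla_i\boldsymbol g_i(x_1,\dots,x_m)-\nabla_i\boldsymbol g_i(y_1,\dots,y_m)\|^2\le\chi^2\sum_{i=1}^m\|x_i-y_i\|^2.$$ Let $\varepsilon\in]0,1/(\chi+1)[$ and let $(\gamma_n)_{n\in\mathbb N}$ be a sequence in $[\varepsilon,(1-\varepsilon)/\chi]$. For every $i$, let $x_{i,0}\in\mathcal H_i$ and let $(a_{i,n})_n,(b_{i,n})_n,(c_{i,n})_n$ be absolutely summable sequences in $\mathcal H_i$. For every $n\in\mathbb N$ define $y_{i,n}=x_{i,n}-\gamma_n(\nabla_i\boldsymbol g_i(x_{1,n},\dots,x_{m,n})+a_{i,n})$ for $i=1,\dots,m$; $(p_{1,n},\dots,p_{m,n})=\operatorname{prox}_{\gamma_n\boldsymbol f}(y_{1,n},\dots,y_{m,n})+(b_{1,n},\dots,b_{m,n})$; $q_{i,n}=p_{i,n}-\gamma_n(\nabla_i\boldsymbol g_i(p_{1,n},\dots,p_{m,n})+c_{i,n})$ and $x_{i,n+1}=x_{i,n}-y_{i,n}+q_{i,n}$ for $i=1,\dots,m$. Then there exists a solution $(\overline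 x_1,\dots,\overline x_m)$ to Problem (P) such that for every $i$, $x_{i,n}\rightharpoonup\overline x_i$ and $p_{i,n}\rightharpoonup\overline x_i$.
   Context: Let $m\ge2$ be an integer and let $\mathcal H_1,\dots,\mathcal H_m$ be real Hilbert spaces. Let $\boldsymbol{\mathcal H}=\mathcal H_1\oplus\cdots\oplus\mathcal H_m$ with inner product $\sum_i\langle x_i,y_i\rangle$. $\Gamma_0(\mathcal K)$ denotes the proper lower semicontinuous convex functions $\mathcal K\to\left]-\infty,+\infty\right]$. Let $\boldsymbol f\in\Gamma_0(\boldsymbol{\mathcal H})$ with subdifferential $\partial\boldsymbol f$. For each $i$, $\boldsymbol g_i:\boldsymbol{\mathcal H}\to\left]-\infty,+\infty\right]$ is such that for every $(x_1,\dots,x_m)$, $x\mapsto\boldsymbol g_i(x_1,\dots,x_{i-1},x,x_{i+1},\dots,x_m)$ is convex and differentiable on $\mathcal H_i$, with gradient $\nabla_i\boldsymbol g_i(x_1,\dots,x_m)$ at $x_i$; and $\sum_i\langle\nabla_i\boldsymbol g_i(\boldsymbol x)-\nabla_i\boldsymbol g_i(\boldsymbol y),x_i-y_i\rangle\ge0$ for all $\boldsymbol x,\boldsymbol y\in\boldsymbol{\mathcal H}$. Problem (P): find $x_1\in\mathcal H_1,\dots,x_m\in\mathcal H_m$ such that for each $i$, $x_i\in\operatorname{Argmin}_{x\in\mathcal H_i}\big(\boldsymbol f(x_1,\dots,x_{i-1},x,x_{i+1},\dots,x_m)+\boldsymbol g_i(x_1,\dots,x_{i-1},x,x_{i+1},\dots,x_m)\big)$.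 For $\varphi\in\Gamma_0(\mathcal K)$, $\operatorname{prox}_\varphi x=\operatorname{argmin}_{y}\big(\varphi(y)+\tfrac12\|x-y\|^2\big)$. $\rightharpoonup$ denotes weak convergence. *)

(* Defs.v *)
From Stdlib Require Import Reals.
From mathcomp Require Import ssreflect ssrfun ssrbool eqtype ssrnat seq fintype bigop.

Set Implicit Arguments.
Unset Strict Implicit.

Open Scope R_scope.

Record RawIP := {
  car :> Type;
  vzero : car;
  vadd : car -> car -> car;
  vopp : car -> car;
  vscal : R -> car -> car;
  inner : car -> car -> R
}.
Arguments vzero {r}.
Arguments vadd {r} _ _.
Arguments vopp {r} _.
Arguments vscal {r} _ _.
Arguments inner {r} _ _.

Section Generic.
Variable V : RawIP.

Definition vsub (x y : V) : V := vadd x (vopp y).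
Definition norm (x : V) : R := sqrt (inner x x).

Definition hilbert_axioms : Prop :=
  (forall x y z : V, vadd x (vadd y z) = vadd (vadd x y) z) /\
  (forall x y : V, vadd x y = vadd y x) /\
  (forall x : V, vadd x vzero = x) /\
  (forall x : V, vadd x (vopp x) = vzero) /\
  (forall (a : R) (x y : V), vscal a (vadd x y) = vadd (vscal a x) (vscal a y)) /\
  (forall (a b : R) (x : V), vscal (a + b) x = vadd (vscal a x) (vscal b x)) /\
  (forall (a b : R) (x : V), vscal a (vscal b x) = vscal (a * b) x) /\
  (forall x : V, vscal 1 x = x) /\
  (forall x y : V, inner x y = inner y x) /\
  (forall x y z : V, inner (vadd x y) z = inner x z + inner y z) /\
  (forall (a : R) (x y : V), inner (vscal a x) y = a * inner x y) /\
  (forall x : V, 0 <= inner x x) /\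
  (forall x : V, inner x x = 0 -> x = vzero) /\
  (forall u : nat -> V,
     (forall eps, 0 < eps -> exists N, forall p q, (N <= p)%nat -> (N <= q)%nat ->
        norm (vsub (u p) (u q)) < eps) ->
     exists l : V, Un_cv (fun n => norm (vsub (u n) l)) 0).

Definition weak_cv (u : nat -> V) (l : V) : Prop :=
  forall z : V, Un_cv (fun n => inner (u n) z) (inner l z).

Definition abs_summable (u : nat -> V) : Prop :=
  exists M : R, forall N, sum_f_R0 (fun n => norm (u n)) N <= M.
End Generic.

Record HSpace := { hs_raw :> RawIP; hs_ax : hilbert_axioms hs_raw }.

Inductive ERbar := Fin (r : R) | PInf.

Definition ERle (a b : ERbar) : Prop :=
  match a, b with
  | _, PInf => True
  | PInf, Fin _ => False
  | Fin x, Fin y => x <= y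
  end.

Definition ERlt (a b : ERbar) : Prop :=
  match a, b with
  | Fin x, Fin y => x < y
  | Fin _, PInf => True
  | PInf, _ => False
  end.

Definition ERplus (a b : ERbar) : ERbar :=
  match a, b with
  | Fin x, Fin y => Fin (x + y)
  | _, _ => PInf
  end.

(* multiplication by a scalar t > 0 *)
Definition ERscal (t : R) (a : ERbar) : ERbar :=
  match a with Fin x => Fin (t * x) | PInf => PInf end.

Section Functions.
Variable V : RawIP.
Implicit Types (phi : V -> ERbar) (x y u : V).

Definition proper phi : Prop := exists x, phi x <> PInf.

Definition convex phi : Prop :=
  forall x y (t : R), 0 < t < 1 ->
    ERle (phi (vadd (vscal t x) (vscal (1 - t) y)))
         (ERplus (ERscal t (phi x)) (ERscal (1 - t) (phi y))).

Definition lsc phi : Prop :=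
  forall x (xi : R), ERlt (Fin xi) (phi x) ->
    exists delta, 0 < delta /\
      forall y, norm (vsub y x) < delta -> ERlt (Fin xi) (phi y).

Definition Gamma0 phi : Prop := proper phi /\ lsc phi /\ convex phi.

Definition subdiff phi x u : Prop :=
  forall y, ERle (ERplus (Fin (inner (vsub y x) u)) (phi x)) (phi y).

Definition is_minimizer phi x : Prop := forall y, ERle (phi x) (phi y).

Definition is_prox phi x p : Prop :=
  is_minimizer (fun y => ERplus (phi y) (Fin (/ 2 * (norm (vsub x y)) ^ 2))) p.

Definition has_gradient phi x u : Prop :=
  exists r, phi x = Fin r /\
    forall eps, 0 < eps -> exists delta, 0 < delta /\
      forall h : V, norm h < delta ->
        exists s, phi (vadd x h) = Fin s /\
          Rabs (s - r - inner h u) <= eps * norm h.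
End Functions.

Definition sumI (m : nat) (F : 'I_m -> R) : R := \big[Rplus/0]_(i < m) F i.

Definition prodRaw (m : nat) (H : 'I_m -> RawIP) : RawIP := {|
  car := forall i, H i;
  vzero := fun i => vzero;
  vadd := fun x y i => vadd (x i) (y i);
  vopp := fun x i => vopp (x i);
  vscal := fun a x i => vscal a (x i);
  inner := fun x y => sumI (fun i => inner (x i) (y i))
|}.

Definition prodH (m : nat) (H : 'I_m -> HSpace) : RawIP :=
  prodRaw (fun i => hs_raw (H i)).

Definition solves_P (m : nat) (H : 'I_m -> HSpace)
  (f : prodH H -> ERbar) (g : 'I_m -> prodH H -> ERbar) (xb : prodH H) : Prop :=
  forall i : 'I_m,
    is_minimizer (fun v : H i => ERplus (f (dfwith (xb : forall j, H j) v))
                                         (g i (dfwith (xb : forall j, H j) v)))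
                 (xb i).

(* Main.v *)
Require Import Defs.
From Stdlib Require Import Reals Lra Lia Psatz ClassicalEpsilon Classical FunctionalExtensionality.
From mathcomp Require Import ssreflect.
From mathcomp Require ssrnat.
Open Scope R_scope.


Lemma ax_vaddA (V : HSpace) (x y z : V) : vadd x (vadd y z) = vadd (vadd x y) z.
Proof. destruct V as [V [vaddA [vaddC [vadd0 [vaddN [sa [sb [sc [s1 [sym [addl [scall [pos [def compl]]]]]]]]]]]]]]; simpl in *; apply vaddA. Qed.
Lemma ax_vaddC (V : HSpace) (x y : V) : vadd x y = vadd y x.
Proof. destruct V as [V [vaddA [vaddC [vadd0 [vaddN [sa [sb [sc [s1 [sym [addl [scall [pos [def compl]]]]]]]]]]]]]]; simpl in *; apply vaddC. Qed.
Lemma ax_vadd0 (V : HSpace) (x : V) : vadd x vzero = x.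
Proof. destruct V as [V [vaddA [vaddC [vadd0 [vaddN [sa [sb [sc [s1 [sym [addl [scall [pos [def compl]]]]]]]]]]]]]]; simpl in *; apply vadd0. Qed.
Lemma ax_vaddN (V : HSpace) (x : V) : vadd x (vopp x) = vzero.
Proof. destruct V as [V [vaddA [vaddC [vadd0 [vaddN [sa [sb [sc [s1 [sym [addl [scall [pos [def compl]]]]]]]]]]]]]]; simpl in *; apply vaddN. Qed.
Lemma ax_inner_sym (V : HSpace) (x y : V) : inner x y = inner y x.
Proof. destruct V as [V [vaddA [vaddC [vadd0 [vaddN [sa [sb [sc [s1 [sym [addl [scall [pos [def compl]]]]]]]]]]]]]]; simpl in *; apply sym. Qed.
Lemma inner_addl (V : HSpace) (x y z : V) : inner (vadd x y) z = inner x z + inner y z.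
Proof. destruct V as [V [vaddA [vaddC [vadd0 [vaddN [sa [sb [sc [s1 [sym [addl [scall [pos [def compl]]]]]]]]]]]]]]; simpl in *; apply addl. Qed.
Lemma inner_scall (V : HSpace) (a : R) (x y : V) : inner (vscal a x) y = a * inner x y.
Proof. destruct V as [V [vaddA [vaddC [vadd0 [vaddN [sa [sb [sc [s1 [sym [addl [scall [pos [def compl]]]]]]]]]]]]]]; simpl in *; apply scall. Qed.
Lemma inner_pos (V : HSpace) (x : V) : 0 <= inner x x.
Proof. destruct V as [V [vaddA [vaddC [vadd0 [vaddN [sa [sb [sc [s1 [sym [addl [scall [pos [def compl]]]]]]]]]]]]]]; simpl in *; apply pos. Qed.
Lemma inner_def (V : HSpace) (x : V) : inner x x = 0 -> x = vzero.
Proof. destruct V as [V [vaddA [vaddC [vadd0 [vaddN [sa [sb [sc [s1 [sym [addl [scall [pos [def compl]]]]]]]]]]]]]]; simpl in *; apply def. Qed.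
Lemma ax_complete (V : HSpace) (u : nat -> V) :
  (forall eps, 0 < eps -> exists N, forall p q, (N <= p)%nat -> (N <= q)%nat ->
        norm (vsub (u p) (u q)) < eps) ->
     exists l : V, Un_cv (fun n => norm (vsub (u n) l)) 0.
Proof. destruct V as [V [vaddA [vaddC [vadd0 [vaddN [sa [sb [sc [s1 [sym [addl [scall [pos [def compl]]]]]]]]]]]]]]; simpl in *.
  intro h. apply compl. intros eps he. destruct (h eps he) as [N hN]. exists N.
  intros p q hp hq. apply hN; apply (ssrbool.elimT ssrnat.leP); assumption.
Qed.

Lemma inner_zerol (V : HSpace) (z : V) : inner (@vzero V) z = 0.
Proof.
  assert (h := inner_addl V vzero vzero z). rewrite ax_vadd0 in h. lra.
Qed.
Lemma inner_oppl (V : HSpace) (x z : V) : inner (vopp x) z = - inner x z.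
Proof.
  assert (h := inner_addl V x (vopp x) z). rewrite ax_vaddN inner_zerol in h. lra.
Qed.
Lemma inner_subl (V : HSpace) (x y z : V) : inner (vsub x y) z = inner x z - inner y z.
Proof. unfold vsub. rewrite inner_addl inner_oppl. ring. Qed.

Lemma inner_addr (V : HSpace) (x y z : V) : inner z (vadd x y) = inner z x + inner z y.
Proof. rewrite !(ax_inner_sym V z). apply inner_addl. Qed.
Lemma inner_scalr (V : HSpace) (a : R) (x y : V) : inner y (vscal a x) = a * inner y x.
Proof. rewrite !(ax_inner_sym V y). apply inner_scall. Qed.
Lemma inner_zeror (V : HSpace) (z : V) : inner z (@vzero V) = 0.
Proof. rewrite ax_inner_sym. apply inner_zerol. Qed.
Lemma inner_oppr (V : HSpace) (x z : V) : inner z (vopp x) = - inner z x.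
Proof. rewrite !(ax_inner_sym V z). apply inner_oppl. Qed.
Lemma inner_subr (V : HSpace) (x y z : V) : inner z (vsub x y) = inner z x - inner z y.
Proof. rewrite !(ax_inner_sym V z). apply inner_subl. Qed.

Lemma vext (V : HSpace) (x y : V) : (forall z, inner x z = inner y z) -> x = y.
Proof.
  intro h. assert (e : vsub x y = vzero).
  { apply inner_def. rewrite inner_subl. rewrite (h (vsub x y)). ring. }
  assert (x = vadd (vsub x y) y).
  { unfold vsub. rewrite <- ax_vaddA. rewrite (ax_vaddC V (vopp y) y) ax_vaddN ax_vadd0. reflexivity. }
  rewrite H e ax_vaddC ax_vadd0. reflexivity.
Qed.

Ltac vsimpl := repeat (rewrite ?inner_addl ?inner_scall ?inner_oppl ?inner_subl ?inner_zerol
   ?inner_addr ?inner_scalr ?inner_oppr ?inner_subr ?inner_zeror).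
Ltac vring := apply vext; let z := fresh "z" in intro z; vsimpl; first [ring | field].

Lemma norm_sq (V : HSpace) (x : V) : norm x ^ 2 = inner x x.
Proof. unfold norm. rewrite pow2_sqrt; [reflexivity | apply inner_pos]. Qed.
Lemma norm_nonneg (V : HSpace) (x : V) : 0 <= norm x.
Proof. unfold norm. apply sqrt_pos. Qed.

Lemma sq_le_le (a b : R) : 0 <= b -> a ^ 2 <= b ^ 2 -> a <= b.
Proof. intros hb h. destruct (Rle_lt_dec a b); auto. nra. Qed.

Lemma cauchy_schwarz (V : HSpace) (x y : V) : Rabs (inner x y) <= norm x * norm y.
Proof.
  assert (key : inner x y ^ 2 <= inner x x * inner y y).
  { destruct (Req_dec (inner y y) 0) as [e|e].
    - assert (y = vzero) by (apply inner_def; auto). subst y. rewrite !inner_zeror. lra.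
    - assert (p := inner_pos V (vsub (vscal (inner y y) x) (vscal (inner x y) y))).
      revert p; vsimpl; rewrite (ax_inner_sym V y x); intro p.
      assert (py := inner_pos V y).
      assert (0 < inner y y) by lra.
      assert (inner y y * (inner y y * inner x x - inner x y ^2) >= 0) by nra.
      nra. }
  rewrite <- (norm_sq V x), <- (norm_sq V y) in key.
  assert (nx := norm_nonneg V x). assert (ny := norm_nonneg V y).
  assert (h : Rabs (inner x y) ^2 <= (norm x * norm y)^2).
  { rewrite RPow_abs Rabs_right; [|apply Rle_ge, pow2_ge_0]. nra. }
  apply sq_le_le; [apply Rmult_le_pos; lra| exact h].
Qed.
Lemma ax_scal_addr (V : HSpace) (a : R) (x y : V) : vscal a (vadd x y) = vadd (vscal a x) (vscal a y).
Proof. vring. Qed.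

Lemma inner_le (V : HSpace) (x y : V) : inner x y <= norm x * norm y.
Proof. assert (h := cauchy_schwarz V x y). assert (h2 := Rle_abs (inner x y)). lra. Qed.
Lemma inner_ge (V : HSpace) (x y : V) : - (norm x * norm y) <= inner x y.
Proof. assert (h := cauchy_schwarz V x y). assert (h2 := Rle_abs (- inner x y)). rewrite Rabs_Ropp in h2. lra. Qed.

Lemma norm_of_sq (V : HSpace) (x : V) (r : R) : 0 <= r -> inner x x = r ^ 2 -> norm x = r.
Proof. intros hr h. unfold norm. rewrite h. apply sqrt_pow2; auto. Qed.

Lemma norm_eq_inner (V : HSpace) (x y : V) : inner x x = inner y y -> norm x = norm y.
Proof. intro h. unfold norm. rewrite h. reflexivity. Qed.

Lemma norm_zero (V : HSpace) : norm (@vzero V) = 0.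
Proof. apply norm_of_sq; [lra|]. rewrite inner_zerol. ring. Qed.

Lemma norm_eq0 (V : HSpace) (x : V) : norm x = 0 -> x = vzero.
Proof. intro h. apply inner_def. rewrite -norm_sq h. ring. Qed.

Lemma norm_scal (V : HSpace) (a : R) (x : V) : norm (vscal a x) = Rabs a * norm x.
Proof.
  apply norm_of_sq. apply Rmult_le_pos; [apply Rabs_pos| apply norm_nonneg].
  vsimpl. rewrite Rpow_mult_distr norm_sq pow2_abs. ring.
Qed.

Lemma norm_opp (V : HSpace) (x : V) : norm (vopp x) = norm x.
Proof. apply norm_eq_inner. vsimpl. ring. Qed.

Lemma norm_sub_sym (V : HSpace) (x y : V) : norm (vsub x y) = norm (vsub y x).
Proof. apply norm_eq_inner. vsimpl. rewrite (ax_inner_sym V x y). ring. Qed.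

Lemma norm_sq_add (V : HSpace) (x y : V) :
  norm (vadd x y) ^ 2 = norm x ^ 2 + 2 * inner x y + norm y ^ 2.
Proof. rewrite !norm_sq. vsimpl. rewrite (ax_inner_sym V y x). ring. Qed.

Lemma norm_sq_sub (V : HSpace) (x y : V) :
  norm (vsub x y) ^ 2 = norm x ^ 2 - 2 * inner x y + norm y ^ 2.
Proof. rewrite !norm_sq. vsimpl. rewrite (ax_inner_sym V y x). ring. Qed.

Lemma norm_triangle (V : HSpace) (x y : V) : norm (vadd x y) <= norm x + norm y.
Proof.
  apply sq_le_le. assert (h1 := norm_nonneg V x). assert (h2 := norm_nonneg V y). lra.
  rewrite norm_sq_add. assert (h := inner_le V x y). nra.
Qed.

Lemma norm_sub_le (V : HSpace) (x y : V) : norm (vsub x y) <= norm x + norm y.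
Proof. unfold vsub. rewrite -(norm_opp V y). apply norm_triangle. Qed.

Lemma norm_sub_tri (V : HSpace) (x y z : V) :
  norm (vsub x z) <= norm (vsub x y) + norm (vsub y z).
Proof.
  replace (vsub x z) with (vadd (vsub x y) (vsub y z)) by vring. apply norm_triangle.
Qed.

Lemma norm_rev_tri (V : HSpace) (x y : V) : Rabs (norm x - norm y) <= norm (vsub x y).
Proof.
  apply Rabs_le. split.
  - assert (h := norm_sub_tri V y x vzero).
    replace (vsub y vzero) with y in h by vring. replace (vsub x vzero) with x in h by vring.
    rewrite norm_sub_sym in h. lra.
  - assert (h := norm_sub_tri V x y vzero).
    replace (vsub y vzero) with y in h by vring. replace (vsub x vzero) with x in h by vring. lra.
Qed.


Lemma small_inv (a : R) : 0 < a -> exists N, forall n, (n >= N)%nat -> / (INR n + 1) < a.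
Proof.
  intro ha. destruct (archimed_cor1 a ha) as [N [h1 h2]]. exists N. intros n hn.
  apply Rle_lt_trans with (/ INR N); auto.
  apply Rinv_le_contravar. apply lt_0_INR; lia.
  assert (INR N <= INR n) by (apply le_INR; lia). lra.
Qed.

Lemma cv_squeeze0 (u v : nat -> R) : (forall n, 0 <= u n <= v n) -> Un_cv v 0 -> Un_cv u 0.
Proof.
  intros h hv eps he. destruct (hv eps he) as [N hN]. exists N. intros n hn.
  specialize (hN n hn). specialize (h n). unfold Rdist in *.
  rewrite Rminus_0_r in hN |- *. rewrite Rabs_right in hN; [|lra]. rewrite Rabs_right; lra.
Qed.

Lemma cv_ext (u v : nat -> R) l : (forall n, u n = v n) -> Un_cv u l -> Un_cv v l.
Proof. intros h hu eps he. destruct (hu eps he) as [N hN]. exists N. intros n hn. rewrite <- h. auto. Qed.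

Lemma cv_const (c : R) : Un_cv (fun _ => c) c.
Proof. intros eps he. exists O. intros. unfold Rdist. rewrite Rminus_eq_0 Rabs_R0. lra. Qed.

Lemma cv_scal (u : nat -> R) a l : Un_cv u l -> Un_cv (fun n => a * u n) (a * l).
Proof. intro h. apply CV_mult; auto. apply cv_const. Qed.

Lemma cv_0_abs (u : nat -> R) : Un_cv u 0 <-> Un_cv (fun n => Rabs (u n)) 0.
Proof.
  split; intros h eps he; destruct (h eps he) as [N hN]; exists N; intros n hn;
  specialize (hN n hn); unfold Rdist in *; rewrite Rminus_0_r in hN; rewrite Rminus_0_r.
  - rewrite Rabs_Rabsolu. auto.
  - rewrite Rabs_Rabsolu in hN. auto.
Qed.

Lemma cv_bounded_mult0 (u v : nat -> R) (M : R) :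
  (forall n, Rabs (u n) <= M) -> Un_cv v 0 -> Un_cv (fun n => u n * v n) 0.
Proof.
  intros hM hv. apply cv_0_abs.
  apply cv_squeeze0 with (fun n => (Rabs M + 1) * Rabs (v n)).
  - intro n. rewrite Rabs_mult. split. apply Rmult_le_pos; apply Rabs_pos.
    apply Rmult_le_compat_r. apply Rabs_pos. specialize (hM n). assert (M <= Rabs M) by apply Rle_abs. lra.
  - replace 0 with ((Rabs M + 1) * 0) by ring. apply cv_scal. apply -> cv_0_abs. auto.
Qed.

Lemma cv_unique (u : nat -> R) l1 l2 : Un_cv u l1 -> Un_cv u l2 -> l1 = l2.
Proof. apply UL_sequence. Qed.

Definition sincr (phi : nat -> nat) := forall n, (phi n < phi (S n))%nat.

Lemma sincr_ge phi : sincr phi -> forall n, (n <= phi n)%nat.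
Proof. intros h n. induction n. lia. specialize (h n). lia. Qed.

Lemma sincr_lt phi : sincr phi -> forall a b, (a < b)%nat -> (phi a < phi b)%nat.
Proof.
  intros h a b hab. induction b. lia.
  destruct (Nat.eq_dec a b). subst. apply h. specialize (h b). assert (a < b)%nat by lia. specialize (IHb H). lia.
Qed.

Lemma sincr_le phi : sincr phi -> forall a b, (a <= b)%nat -> (phi a <= phi b)%nat.
Proof. intros h a b hab. destruct (Nat.eq_dec a b). subst; lia. assert (hh := sincr_lt phi h a b). lia. Qed.

Lemma sincr_comp phi psi : sincr phi -> sincr psi -> sincr (fun n => phi (psi n)).
Proof. intros h1 h2 n. apply sincr_lt; auto. Qed.

Lemma cv_subseq (u : nat -> R) l phi : sincr phi -> Un_cv u l -> Un_cv (fun n => u (phi n)) l.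
Proof.
  intros hp hu eps he. destruct (hu eps he) as [N hN]. exists N. intros n hn.
  apply hN. assert (hh := sincr_ge phi hp n). lia.
Qed.

Lemma cv_le_lim (u : nat -> R) l M : (forall n, u n <= M) -> Un_cv u l -> l <= M.
Proof. intros h hu. apply Rle_cv_lim with u (fun _ => M); auto. apply cv_const. Qed.

Lemma cv_ge_lim (u : nat -> R) l M : (forall n, M <= u n) -> Un_cv u l -> M <= l.
Proof. intros h hu. apply Rle_cv_lim with (fun _ => M) u; auto. apply cv_const. Qed.

Lemma cv_shift (u : nat -> R) l : Un_cv u l -> Un_cv (fun n => u (S n)) l.
Proof. intros hu eps he. destruct (hu eps he) as [N hN]. exists N. intros n hn. apply hN. lia. Qed.

Lemma cv_squeeze (u v w : nat -> R) l : (forall n, u n <= v n <= w n) -> Un_cv u l -> Un_cv w l -> Un_cv v l.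
Proof.
  intros h hu hw eps he. destruct (hu eps he) as [N1 h1]. destruct (hw eps he) as [N2 h2].
  exists (N1 + N2)%nat. intros n hn. specialize (h1 n ltac:(lia)). specialize (h2 n ltac:(lia)).
  specialize (h n). unfold Rdist in *. apply Rabs_def2 in h1. apply Rabs_def2 in h2. apply Rabs_def1; lra.
Qed.

Lemma leq_eps (a : R) : (forall eps, 0 < eps -> a <= eps) -> a <= 0.
Proof. intro h. destruct (Rle_lt_dec a 0); auto. specialize (h (a/2) ltac:(lra)). lra. Qed.

Lemma leq_t (a b : R) : (forall t, 0 < t < 1 -> a <= t * b) -> a <= 0.
Proof.
  intro h. destruct (Rle_lt_dec a 0); auto.
  set (t := a / (2 * (Rabs b + a))).
  assert (hb := Rabs_pos b). assert (hb2 := Rle_abs b).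
  assert (ht : 0 < t < 1).
  { unfold t. split. apply Rdiv_lt_0_compat; lra. apply Rmult_lt_reg_r with (2 * (Rabs b + a)). lra.
    unfold Rdiv. rewrite Rmult_assoc Rinv_l. lra. lra. }
  specialize (h t ht).
  assert (t * b <= t * Rabs b) by (apply Rmult_le_compat_l; lra).
  assert (t * (2 * (Rabs b + a)) = a). { unfold t. field. lra. }
  nra.
Qed.

Definition vcv (V : HSpace) (u : nat -> V) (l : V) := Un_cv (fun n => norm (vsub (u n) l)) 0.

Lemma vcv_weak (V : HSpace) (u : nat -> V) l : vcv V u l -> weak_cv u l.
Proof.
  intros h z.
  assert (e : forall n, inner (u n) z = inner l z + inner (vsub (u n) l) z) by (intro; vsimpl; ring).
  intros eps he.
  destruct (Req_dec (norm z) 0) as [hz|hz].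
  - exists O. intros n _. unfold Rdist. rewrite e. assert (hh := cauchy_schwarz V (vsub (u n) l) z).
    rewrite hz Rmult_0_r in hh. assert (Rabs (inner (vsub (u n) l) z) = 0) by (assert (hp:=Rabs_pos (inner (vsub (u n) l) z)); lra).
    replace (inner l z + inner (vsub (u n) l) z - inner l z) with (inner (vsub (u n) l) z) by ring. lra.
  - assert (hzp : 0 < norm z) by (assert (hh := norm_nonneg V z); lra).
    destruct (h (eps / norm z) ltac:(apply Rdiv_lt_0_compat; lra)) as [N hN]. exists N. intros n hn.
    specialize (hN n hn). unfold Rdist in *. rewrite Rminus_0_r Rabs_right in hN; [|apply Rle_ge, norm_nonneg].
    rewrite e. replace (inner l z + inner (vsub (u n) l) z - inner l z) with (inner (vsub (u n) l) z) by ring.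
    eapply Rle_lt_trans. apply cauchy_schwarz.
    apply Rmult_lt_reg_r with (/ norm z). apply Rinv_0_lt_compat; lra.
    replace (norm (vsub (u n) l) * norm z * / norm z) with (norm (vsub (u n) l)) by (field; lra). exact hN.
Qed.

Lemma inner_bounded_0 (V : HSpace) (u v : nat -> V) M :
  (forall n, norm (u n) <= M) -> Un_cv (fun n => norm (v n)) 0 -> Un_cv (fun n => inner (u n) (v n)) 0.
Proof.
  intros hM hv. apply cv_0_abs. apply cv_squeeze0 with (fun n => M * norm (v n)).
  - intro n. split. apply Rabs_pos. eapply Rle_trans. apply cauchy_schwarz. apply Rmult_le_compat_r. apply norm_nonneg. auto.
  - replace 0 with (M * 0) by ring. apply cv_scal. auto.
Qed.

Lemma weak_unique (V : HSpace) (u : nat -> V) l1 l2 : weak_cv u l1 -> weak_cv u l2 -> l1 = l2.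
Proof.
  intros h1 h2. apply vext. intro z. apply (cv_unique _ _ _ (h1 z) (h2 z)).
Qed.

Lemma weak_subseq (V : HSpace) (u : nat -> V) l phi : sincr phi -> weak_cv u l -> weak_cv (fun n => u (phi n)) l.
Proof. intros hp h z. apply (cv_subseq (fun n => inner (u n) z)); auto. Qed.

Lemma weak_close (V : HSpace) (u v : nat -> V) l :
  weak_cv u l -> Un_cv (fun n => norm (vsub (u n) (v n))) 0 -> weak_cv v l.
Proof.
  intros hu hd z.
  apply cv_ext with (fun n => inner (u n) z - inner (vsub (u n) (v n)) z).
  { intro n. vsimpl. ring. }
  replace (inner l z) with (inner l z - 0) by ring. apply CV_minus. apply hu.
  apply cv_ext with (fun n => inner z (vsub (u n) (v n))). intro; apply ax_inner_sym.
  apply inner_bounded_0 with (norm z). intro; lra. auto.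
Qed.


Definition closedS (V : HSpace) (C : V -> Prop) :=
  forall (u : nat -> V) l, (forall n, C (u n)) -> vcv V u l -> C l.
Definition convexS (V : HSpace) (C : V -> Prop) :=
  forall a b t, C a -> C b -> 0 <= t <= 1 -> C (vadd (vscal t a) (vscal (1 - t) b)).

Lemma sq_lt_lt (a b : R) : 0 <= b -> a ^ 2 < b ^ 2 -> a < b.
Proof. intros hb h. destruct (Rlt_le_dec a b); auto. nra. Qed.

Lemma proj_min (V : HSpace) (C : V -> Prop) (w : V) :
  (exists c0, C c0) -> closedS V C -> convexS V C ->
  exists p, C p /\ forall c, C c -> norm (vsub w p) <= norm (vsub w c).
Proof.
  intros [c0 hc0] hcl hcv.
  set (E := fun r => exists c, C c /\ r = - norm (vsub w c)).
  assert (hb : bound E).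
  { exists 0. intros r [c [_ ->]]. assert (hh := norm_nonneg V (vsub w c)). lra. }
  assert (hne : exists r, E r) by (exists (- norm (vsub w c0)); exists c0; auto).
  destruct (completeness E hb hne) as [m [hm1 hm2]].
  set (d := - m).
  assert (hlow : forall c, C c -> d <= norm (vsub w c)).
  { intros c hc. assert (E (- norm (vsub w c))) by (exists c; auto). specialize (hm1 _ H). unfold d. lra. }
  assert (hd0 : 0 <= d) by (specialize (hlow c0 hc0); assert (hh := hm2 0); unfold d;
     assert (m <= 0); [apply hm2; intros r [c [_ ->]]; assert (hh2 := norm_nonneg V (vsub w c)); lra | lra]).
  assert (happ : forall e, 0 < e -> exists c, C c /\ norm (vsub w c) < d + e).
  { intros e he. apply NNPP. intro hn.
    assert (m <= m - e); [|lra].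
    apply hm2. intros r [c [hc ->]].
    destruct (Rlt_le_dec (norm (vsub w c)) (d + e)) as [hlt|hle].
    - exfalso; apply hn; exists c; auto.
    - unfold d in hle. lra. }
  assert (hch : forall n : nat, exists c, C c /\ norm (vsub w c) < d + / (INR n + 1)).
  { intro n. apply happ. apply Rinv_0_lt_compat. assert (hh := pos_INR n). lra. }
  set (u := fun n => proj1_sig (constructive_indefinite_description _ (hch n))).
  assert (hu : forall n, C (u n) /\ norm (vsub w (u n)) < d + / (INR n + 1)).
  { intro n. unfold u. destruct (constructive_indefinite_description _ (hch n)). simpl. auto. }
  assert (hinvpos : forall n : nat, 0 < / (INR n + 1) <= 1).
  { intro n. assert (hh := pos_INR n). split. apply Rinv_0_lt_compat. lra.
    rewrite <- Rinv_1. apply Rinv_le_contravar; lra. }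
  assert (hcauchy : forall eps, 0 < eps -> exists N, forall p q, (N <= p)%nat -> (N <= q)%nat ->
        norm (vsub (u p) (u q)) < eps).
  { intros eps he.
    destruct (small_inv (Rmin 1 (eps ^ 2 / (8 * d + 5)))) as [N hN].
    { apply Rmin_pos. lra. apply Rdiv_lt_0_compat. nra. lra. }
    exists N. intros p q hp hq.
    assert (hep := hN p hp). assert (heq := hN q hq).
    assert (hm1' := Rmin_l 1 (eps ^ 2 / (8 * d + 5))). assert (hm2' := Rmin_r 1 (eps ^ 2 / (8 * d + 5))).
    destruct (hu p) as [hcp hdp]. destruct (hu q) as [hcq hdq].
    assert (hip := hinvpos p). assert (hiq := hinvpos q).
    set (ep := / (INR p + 1)) in *. set (eqq := / (INR q + 1)) in *.
    set (a := vsub w (u p)) in *. set (b := vsub w (u q)) in *.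
    assert (hmid : C (vadd (vscal (1/2) (u p)) (vscal (1 - 1/2) (u q)))) by (apply hcv; auto; lra).
    assert (hlm := hlow _ hmid).
    assert (e1 : vsub w (vadd (vscal (1/2) (u p)) (vscal (1 - 1/2) (u q))) = vadd (vscal (1/2) a) (vscal (1/2) b)) by (unfold a, b; vring).
    assert (e2 : vsub (u p) (u q) = vsub b a) by (unfold a, b; vring).
    rewrite e1 in hlm. rewrite e2.
    apply sq_lt_lt. lra.
    assert (hsq : d ^ 2 <= norm (vadd (vscal (1/2) a) (vscal (1/2) b)) ^ 2) by (apply pow_incr; lra).
    rewrite norm_sq_add !norm_scal in hsq. rewrite inner_scall inner_scalr in hsq.
    rewrite norm_sq_sub. rewrite (ax_inner_sym V b a).
    rewrite Rabs_right in hsq; [|lra].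
    assert (hna := norm_nonneg V a). assert (hnb := norm_nonneg V b).
    assert (ha2 : norm a ^ 2 <= (d + ep) ^ 2) by (apply pow_incr; lra).
    assert (hb2 : norm b ^ 2 <= (d + eqq) ^ 2) by (apply pow_incr; lra).
    assert (hk : norm b ^ 2 - 2 * inner a b + norm a ^ 2 <= 2 * (2 * d * ep + ep ^ 2) + 2 * (2 * d * eqq + eqq ^ 2)) by nra.
    assert (hep1 : ep < 1) by lra. assert (heq1 : eqq < 1) by lra.
    assert (hep2 : ep < eps ^ 2 / (8 * d + 5)) by lra. assert (heq2 : eqq < eps ^ 2 / (8 * d + 5)) by lra.
    assert (hx : (8 * d + 5) * ep < eps ^ 2).
    { apply Rmult_lt_reg_r with (/ (8 * d + 5)). apply Rinv_0_lt_compat; lra.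
      replace ((8 * d + 5) * ep * / (8 * d + 5)) with ep by (field; lra). exact hep2. }
    assert (hy : (8 * d + 5) * eqq < eps ^ 2).
    { apply Rmult_lt_reg_r with (/ (8 * d + 5)). apply Rinv_0_lt_compat; lra.
      replace ((8 * d + 5) * eqq * / (8 * d + 5)) with eqq by (field; lra). exact heq2. }
    nra. }
  destruct (ax_complete V u hcauchy) as [p hp].
  exists p. assert (hCp : C p) by (apply (hcl u p); [intro n; apply hu | exact hp]).
  split; auto.
  assert (hwp : norm (vsub w p) <= d).
  { apply Rminus_le. apply leq_eps. intros e he.
    destruct (hp (e/2) ltac:(lra)) as [N1 h1].
    destruct (small_inv (e/2) ltac:(lra)) as [N2 h2].
    specialize (h1 (N1 + N2)%nat ltac:(lia)). specialize (h2 (N1 + N2)%nat ltac:(lia)).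
    unfold Rdist in h1. rewrite Rminus_0_r Rabs_right in h1; [|apply Rle_ge, norm_nonneg].
    destruct (hu (N1 + N2)%nat) as [_ hh].
    assert (ht := norm_sub_tri V w (u (N1 + N2)%nat) p). lra. }
  intros c hc. specialize (hlow c hc). lra.
Qed.

Lemma proj_exists (V : HSpace) (C : V -> Prop) (w : V) :
  (exists c0, C c0) -> closedS V C -> convexS V C ->
  exists p, C p /\ forall c, C c -> inner (vsub w p) (vsub c p) <= 0.
Proof.
  intros hne hcl hcv. destruct (proj_min V C w hne hcl hcv) as [p [hp hmin]].
  exists p. split; auto. intros c hc.
  set (a := vsub w p). set (b := vsub c p).
  apply (leq_t _ (norm b ^ 2 / 2)). intros t ht.
  assert (hq : C (vadd (vscal t c) (vscal (1 - t) p))) by (apply hcv; auto; lra).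
  specialize (hmin _ hq).
  assert (e : vsub w (vadd (vscal t c) (vscal (1 - t) p)) = vsub a (vscal t b)) by (unfold a, b; vring).
  rewrite e in hmin. fold a in hmin.
  assert (hsq : norm a ^ 2 <= norm (vsub a (vscal t b)) ^ 2) by (apply pow_incr; split; [apply norm_nonneg| exact hmin]).
  rewrite norm_sq_sub norm_scal inner_scalr Rabs_right in hsq; [|lra].
  assert (0 <= norm b) by apply norm_nonneg.
  assert (h2 : 2 * t * inner a b <= t ^ 2 * norm b ^ 2) by nra.
  assert (h3 : t * (2 * inner a b) <= t * (t * norm b ^ 2)) by nra.
  apply Rmult_le_reg_l in h3; [|lra]. lra.
Qed.

Definition subspaceS (V : HSpace) (C : V -> Prop) :=
  C vzero /\ (forall a b, C a -> C b -> C (vadd a b)) /\ (forall t a, C a -> C (vscal t a)).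

Lemma subspace_convex (V : HSpace) C : subspaceS V C -> convexS V C.
Proof. intros [h0 [ha hs]] a b t hA hB _. apply ha; apply hs; auto. Qed.

Lemma subspace_sub (V : HSpace) C : subspaceS V C -> forall a b, C a -> C b -> C (vsub a b).
Proof.
  intros [h0 [ha hs]] a b hA hB. replace (vsub a b) with (vadd a (vscal (-1) b)) by vring. auto.
Qed.

Lemma proj_subspace (V : HSpace) (C : V -> Prop) (w : V) :
  subspaceS V C -> closedS V C ->
  exists p, C p /\ forall c, C c -> inner (vsub w p) c = 0.
Proof.
  intros hs hcl. destruct hs as [h0 [ha hsc]] eqn:E.
  destruct (proj_exists V C w (ex_intro _ vzero h0) hcl (subspace_convex V C hs)) as [p [hp hv]].
  exists p. split; auto. intros c hc.
  assert (h1 := hv (vadd p c) (ha _ _ hp hc)).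
  assert (h2 := hv (vadd p (vscal (-1) c)) (ha _ _ hp (hsc _ _ hc))).
  replace (vsub (vadd p c) p) with c in h1 by vring.
  replace (vsub (vadd p (vscal (-1) c)) p) with (vscal (-1) c) in h2 by vring.
  rewrite inner_scalr in h2. lra.
Qed.


Lemma build_seq (P : nat -> nat -> Prop) :
  (forall N k, exists p, (N <= p)%nat /\ P k p) -> exists th, sincr th /\ forall k, P k (th k).
Proof.
  intro h. set (g := fun N k => proj1_sig (constructive_indefinite_description _ (h N k))).
  assert (hg : forall N k, (N <= g N k)%nat /\ P k (g N k)).
  { intros N k. unfold g. destruct (constructive_indefinite_description _ (h N k)). simpl. auto. }
  exists (fix th k := match k with 0 => g 0%nat 0%nat | S k' => g (S (th k')) (S k') end).
  split.
  - intro n. simpl. destruct (hg (S ((fix th (k : nat) : nat :=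
           match k with 0 => g 0%nat 0%nat | S k' => g (S (th k')) (S k') end) n)) (S n)). lia.
  - intro k. destruct k; simpl; apply hg.
Qed.

Lemma bw_extract (v : nat -> R) M : (forall n, Rabs (v n) <= M) ->
  exists th, sincr th /\ exists l, Un_cv (fun n => v (th n)) l.
Proof.
  intro hM.
  destruct (Bolzano_Weierstrass v (fun c => -M <= c <= M) (compact_P3 (-M) M)) as [l hl].
  { intro n. specialize (hM n). apply Rabs_def2b in hM || idtac. split; [apply Rabs_le_between in hM || idtac|];
    assert (h1 := Rle_abs (v n)); assert (h2 := Rle_abs (- v n)); rewrite Rabs_Ropp in h2; lra. }
  assert (hn : forall N k, exists p, (N <= p)%nat /\ Rabs (v p - l) < / (INR k + 1)).
  { intros N k. assert (hpos : 0 < / (INR k + 1)) by (apply Rinv_0_lt_compat; assert (hh := pos_INR k); lra).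
    destruct (hl (fun y => Rabs (y - l) < / (INR k + 1)) N) as [p [hp1 hp2]].
    { exists (mkposreal _ hpos). intros y hy. exact hy. }
    exists p. auto. }
  destruct (build_seq _ hn) as [th [hth hk]]. exists th. split; auto. exists l.
  intros eps he. destruct (small_inv eps he) as [N hN]. exists N. intros n hn'.
  unfold Rdist. eapply Rlt_trans. apply hk. apply hN. auto.
Qed.

Lemma ex_theta (v : nat -> R) : exists th : nat -> nat,
  (exists M, forall n, Rabs (v n) <= M) -> sincr th /\ exists l, Un_cv (fun n => v (th n)) l.
Proof.
  destruct (classic (exists M, forall n, Rabs (v n) <= M)) as [[M hM]|hn].
  - destruct (bw_extract v M hM) as [th hth]. exists th. auto.
  - exists (fun n => n). intro h. contradiction.
Qed.

Definition Theta (v : nat -> R) : nat -> nat :=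
  proj1_sig (constructive_indefinite_description _ (ex_theta v)).

Lemma Theta_spec (v : nat -> R) M : (forall n, Rabs (v n) <= M) ->
  sincr (Theta v) /\ exists l, Un_cv (fun n => v (Theta v n)) l.
Proof.
  intro h. unfold Theta. destruct (constructive_indefinite_description _ (ex_theta v)) as [th hth]. simpl.
  apply hth. exists M; auto.
Qed.

Fixpoint psi (s : nat -> nat -> R) (j : nat) : nat -> nat :=
  match j with
  | O => Theta (s O)
  | S j' => fun n => psi s j' (Theta (fun m => s (S j') (psi s j' m)) n)
  end.

Lemma diagonal (s : nat -> nat -> R) (M : nat -> R) :
  (forall j n, Rabs (s j n) <= M j) ->
  exists phi, sincr phi /\ forall j, exists l, Un_cv (fun k => s j (phi k)) l.
Proof.
  intro hM.
  assert (P1 : forall j, sincr (psi s j) /\ exists l, Un_cv (fun n => s j (psi s j n)) l).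
  { intro j. destruct j as [|j].
    - simpl. apply (Theta_spec _ (M O)). auto.
    - induction j as [|j IH].
      + simpl. destruct (Theta_spec (s O) (M O)) as [h1 _]; auto.
        destruct (Theta_spec (fun m => s 1%nat (Theta (s O) m)) (M 1%nat)) as [h2 h3]; auto.
        split; auto. apply sincr_comp; auto.
      + destruct IH as [IH1 _].
        change (psi s (S (S j))) with (fun n => psi s (S j) (Theta (fun m => s (S (S j)) (psi s (S j) m)) n)).
        destruct (Theta_spec (fun m => s (S (S j)) (psi s (S j) m)) (M (S (S j)))) as [h2 h3]; auto.
        split; auto. apply sincr_comp; auto. }
  assert (P3 : forall j k, (j <= k)%nat -> exists rho : nat -> nat, (forall n, (n <= rho n)%nat) /\
                 forall n, psi s k n = psi s j (rho n)).
  { intros j k hjk. induction k as [|k IH].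
    - assert (j = O) by lia. subst. exists (fun n => n). split; auto.
    - destruct (Nat.eq_dec j (S k)) as [e|ne].
      + subst. exists (fun n => n). split; auto.
      + destruct IH as [rho [hr1 hr2]]. lia.
        set (T := Theta (fun m => s (S k) (psi s k m))).
        assert (hT : sincr T) by (apply (Theta_spec _ (M (S k))); auto).
        exists (fun n => rho (T n)). split.
        * intro n. assert (hh := sincr_ge T hT n). specialize (hr1 (T n)). lia.
        * intro n. simpl. fold T. apply hr2. }
  exists (fun k => psi s k k). split.
  - intro k. simpl.
    set (T := Theta (fun m => s (S k) (psi s k m))).
    assert (hT : sincr T) by (apply (Theta_spec _ (M (S k))); auto).
    assert (hh := sincr_ge T hT (S k)). apply sincr_lt. apply P1. lia.
  - intro j. destruct (P1 j) as [_ [l hl]]. exists l.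
    intros eps he. destruct (hl eps he) as [N hN]. exists (N + j)%nat. intros k hk.
    destruct (P3 j k ltac:(lia)) as [rho [hr1 hr2]]. rewrite hr2. apply hN. specialize (hr1 k). lia.
Qed.

Lemma Rabs_eq_0 (r : R) : Rabs r = 0 -> r = 0.
Proof. intro h. destruct (Req_dec r 0); auto. exfalso; apply (Rabs_no_R0 r); auto. Qed.

Lemma weak_compact (V : HSpace) (x : nat -> V) M : (forall n, norm (x n) <= M) ->
  exists phi, sincr phi /\ exists xb, weak_cv (fun k => x (phi k)) xb.
Proof.
  intro hM.
  assert (hM0 : 0 <= M) by (specialize (hM O); assert (hh := norm_nonneg V (x O)); lra).
  destruct (diagonal (fun j n => inner (x n) (x j)) (fun j => M * norm (x j))) as [phi [hphi hlim]].
  { intros j n. eapply Rle_trans. apply cauchy_schwarz. apply Rmult_le_compat_r. apply norm_nonneg. auto. }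
  exists phi. split; auto.
  set (y := fun k => x (phi k)).
  assert (hyM : forall k, norm (y k) <= M) by (intro; apply hM).
  set (D := fun v => exists l, Un_cv (fun k => inner (y k) v) l).
  assert (hDx : forall j, D (x j)) by (intro j; apply hlim).
  assert (hDs : subspaceS V D).
  { split; [|split].
    - exists 0. apply cv_ext with (fun _ => 0). intro; rewrite inner_zeror; auto. apply cv_const.
    - intros a b [la ha] [lb hb]. exists (la + lb). apply cv_ext with (fun k => inner (y k) a + inner (y k) b).
      intro; rewrite inner_addr; auto. apply CV_plus; auto.
    - intros t a [la ha]. exists (t * la). apply cv_ext with (fun k => t * inner (y k) a).
      intro; rewrite inner_scalr; auto. apply cv_scal; auto. }
  assert (hbnd : forall v k, Rabs (inner (y k) v) <= M * norm v).
  { intros v k. eapply Rle_trans. apply cauchy_schwarz. apply Rmult_le_compat_r. apply norm_nonneg. auto. }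
  assert (hDc : closedS V D).
  { intros u l hu hul.
    destruct (R_complete (fun k => inner (y k) l)) as [L hL]; [|exists L; exact hL].
    intros eps he.
    destruct (hul (eps / (4 * (M + 1)))) as [n0 hn0].
    { apply Rdiv_lt_0_compat; lra. }
    specialize (hn0 n0 (le_n _)). unfold Rdist in hn0. rewrite Rminus_0_r Rabs_right in hn0; [|apply Rle_ge, norm_nonneg].
    destruct (hu n0) as [Lu hLu].
    destruct (hLu (eps / 4)) as [N hN]. lra.
    exists N. intros k k' hk hk'. unfold Rdist.
    assert (h1 := hN k hk). assert (h2 := hN k' hk'). unfold Rdist in h1, h2.
    assert (ek : forall j, inner (y j) l = inner (y j) (u n0) - inner (y j) (vsub (u n0) l)) by (intro; vsimpl; ring).
    rewrite !ek.
    assert (b1 := hbnd (vsub (u n0) l) k). assert (b2 := hbnd (vsub (u n0) l) k').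
    assert (hmm : M * norm (vsub (u n0) l) <= M * (eps / (4 * (M + 1)))) by (apply Rmult_le_compat_l; lra).
    assert (hm3 : M * (eps / (4 * (M + 1))) <= eps / 4).
    { apply Rmult_le_reg_r with (4 * (M + 1)). lra. unfold Rdiv. field_simplify; try lra. }
    apply Rabs_def2 in h1. apply Rabs_def2 in h2.
    apply Rabs_le_between in b1 || idtac.
    assert (c1 := Rle_abs (inner (y k) (vsub (u n0) l))). assert (c2 := Rle_abs (- inner (y k) (vsub (u n0) l))).
    assert (c3 := Rle_abs (inner (y k') (vsub (u n0) l))). assert (c4 := Rle_abs (- inner (y k') (vsub (u n0) l))).
    rewrite Rabs_Ropp in c2. rewrite Rabs_Ropp in c4.
    apply Rabs_def1; lra. }
  assert (exL : forall v, exists l, D v -> Un_cv (fun k => inner (y k) v) l).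
  { intro v. destruct (classic (D v)) as [[l hl]|hn]. exists l; auto. exists 0. intro; contradiction. }
  set (L := fun v => proj1_sig (constructive_indefinite_description _ (exL v))).
  assert (hL : forall v, D v -> Un_cv (fun k => inner (y k) v) (L v)).
  { intros v hv. unfold L. destruct (constructive_indefinite_description _ (exL v)). simpl. auto. }
  destruct hDs as [hD0 [hDa hDsc]] eqn:EDs.
  assert (hLa : forall a b, D a -> D b -> L (vadd a b) = L a + L b).
  { intros a b ha hb. apply (cv_unique (fun k => inner (y k) (vadd a b))). apply hL; auto.
    apply cv_ext with (fun k => inner (y k) a + inner (y k) b). intro; rewrite inner_addr; auto.
    apply CV_plus; auto. }
  assert (hLs : forall t a, D a -> L (vscal t a) = t * L a).
  { intros t a ha. apply (cv_unique (fun k => inner (y k) (vscal t a))). apply hL; auto.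
    apply cv_ext with (fun k => t * inner (y k) a). intro; rewrite inner_scalr; auto.
    apply cv_scal; auto. }
  assert (hLsub : forall a b, D a -> D b -> L (vsub a b) = L a - L b).
  { intros a b ha hb. replace (vsub a b) with (vadd a (vscal (-1) b)) by vring.
    rewrite hLa; auto. rewrite hLs; auto. ring. }
  assert (hLb : forall v, D v -> Rabs (L v) <= M * norm v).
  { intros v hv. apply cv_le_lim with (fun k => Rabs (inner (y k) v)). intro; apply hbnd.
    apply cv_cvabs. auto. }
  assert (hL0 : L vzero = 0).
  { assert (hh := hLb vzero hD0). rewrite norm_zero Rmult_0_r in hh. assert (hh2 := Rabs_pos (L vzero)).
    assert (Rabs (L vzero) = 0) by lra. apply Rabs_eq_0 in H. auto. }
  assert (riesz : exists xb, D xb /\ forall v, D v -> inner xb v = L v).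
  { destruct (classic (forall v, D v -> L v = 0)) as [hall|hnall].
    - exists vzero. split; auto. intros v hv. rewrite inner_zerol hall; auto.
    - apply not_all_ex_not in hnall. destruct hnall as [v0 hv0].
      apply imply_to_and in hv0. destruct hv0 as [hDv0 hLv0].
      set (K := fun v => D v /\ L v = 0).
      assert (hKs : subspaceS V K).
      { split; [|split].
        - split; auto.
        - intros a b [ha1 ha2] [hb1 hb2]. split. auto. rewrite hLa; auto. lra.
        - intros t a [ha1 ha2]. split. auto. rewrite hLs; auto. rewrite ha2. ring. }
      assert (hKc : closedS V K).
      { intros u l hu hul. assert (hDl : D l) by (apply (hDc u l); [intro n; apply hu| auto]).
        split; auto. apply Rabs_eq_0. apply Rle_antisym; [|apply Rabs_pos].
        apply leq_eps. intros e he.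
        destruct (hul (e / (M + 1))) as [n0 hn0]. apply Rdiv_lt_0_compat; lra.
        specialize (hn0 n0 (le_n _)). unfold Rdist in hn0. rewrite Rminus_0_r Rabs_right in hn0; [|apply Rle_ge, norm_nonneg].
        destruct (hu n0) as [hu1 hu2].
        assert (hh := hLb (vsub (u n0) l) ltac:(apply subspace_sub; auto)).
        rewrite hLsub in hh; auto. rewrite hu2 Rminus_0_l Rabs_Ropp in hh.
        assert (hmm : M * norm (vsub (u n0) l) <= M * (e / (M + 1))) by (apply Rmult_le_compat_l; lra).
        assert (hm3 : M * (e / (M + 1)) <= e).
        { apply Rmult_le_reg_r with (M + 1). lra. unfold Rdiv. field_simplify; try lra. }
        lra. }
      destruct (proj_subspace V K v0 hKs hKc) as [p0 [[hp0D hp0L] hp0]].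
      set (e := vsub v0 p0).
      assert (hDe : D e) by (apply subspace_sub; auto).
      assert (hLe : L e = L v0) by (unfold e; rewrite hLsub; auto; lra).
      assert (hee : 0 < inner e e).
      { destruct (inner_pos V e) as [h|h]; auto. symmetry in h. apply inner_def in h.
        exfalso. apply hLv0. rewrite -hLe h hL0. auto. }
      exists (vscal (L e / inner e e) e). split. auto.
      intros v hv.
      assert (hc : K (vsub v (vscal (L v / L e) e))).
      { split. apply subspace_sub; auto. rewrite hLsub; auto. rewrite hLs; auto. field. lra. }
      specialize (hp0 _ hc). fold e in hp0. clearbody e. revert hp0. vsimpl. intro hp0.
      replace (inner e v) with (L v / L e * inner e e) by lra. field. split; lra. }
  destruct riesz as [xb [hDxb hxb]].
  exists xb. intro w.
  destruct (proj_subspace V D w hDs hDc) as [pw [hDpw hpw]].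
  apply cv_ext with (fun k => inner (y k) pw).
  { intro k. assert (hyk : D (y k)) by (apply hDx).
    specialize (hpw _ hyk). revert hpw. vsimpl. rewrite (ax_inner_sym V w (y k)) (ax_inner_sym V pw (y k)). intro; lra. }
  replace (inner xb w) with (L pw). apply hL; auto.
  rewrite -hxb; auto. specialize (hpw _ hDxb). revert hpw. vsimpl. rewrite (ax_inner_sym V w xb) (ax_inner_sym V pw xb). intro; lra.
Qed.


Lemma subdiff_fin (V : HSpace) (f : V -> ERbar) x u y r :
  subdiff f x u -> f y = Fin r -> exists s, f x = Fin s.
Proof.
  intros h hy. specialize (h y). rewrite hy in h. destruct (f x) as [s|]; cbn [ERplus ERscal ERle ERlt] in h. eauto. contradiction.
Qed.

Lemma subdiff_ineq (V : HSpace) (f : V -> ERbar) x u y r s :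
  subdiff f x u -> f x = Fin r -> f y = Fin s -> s >= r + inner (vsub y x) u.
Proof. intros h hx hy. specialize (h y). rewrite hx hy in h. cbn [ERplus ERscal ERle ERlt] in h. lra. Qed.

Lemma subdiff_mono (V : HSpace) (f : V -> ERbar) x u y v r s :
  subdiff f x u -> subdiff f y v -> f x = Fin r -> f y = Fin s ->
  0 <= inner (vsub x y) (vsub u v).
Proof.
  intros hu hv hx hy. assert (h1 := subdiff_ineq V f x u y r s hu hx hy).
  assert (h2 := subdiff_ineq V f y v x s r hv hy hx).
  revert h1 h2. vsimpl. rewrite (ax_inner_sym V x v) (ax_inner_sym V y v). intros. lra.
Qed.

Lemma proper_fin (V : HSpace) (f : V -> ERbar) : proper f -> exists w r, f w = Fin r.
Proof. intros [w hw]. destruct (f w) as [r|] eqn:E. eauto. contradiction. Qed.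

Lemma prox_subdiff (V : HSpace) (f : V -> ERbar) (gam : R) (y r : V) :
  0 < gam -> proper f -> convex f -> is_prox (fun z => ERscal gam (f z)) y r ->
  (exists s, f r = Fin s) /\ subdiff f r (vscal (/ gam) (vsub y r)).
Proof.
  intros hg hp hc hpr.
  assert (hfin : exists s, f r = Fin s).
  { destruct (proper_fin V f hp) as [w0 [r0 h0]]. specialize (hpr w0). cbn [ERplus ERscal ERle ERlt] in hpr. rewrite h0 in hpr.
    cbn [ERplus ERscal ERle ERlt] in hpr. destruct (f r) as [s|]; cbn [ERplus ERscal ERle ERlt] in hpr. eauto. contradiction. }
  split; auto. destruct hfin as [s hs].
  intro w. rewrite hs. destruct (f w) as [fw|] eqn:Ew; cbn [ERplus ERscal ERle ERlt]; auto.
  set (a := vsub y r). set (b := vsub w r).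
  assert (key : gam * s - gam * fw + inner a b <= 0).
  { apply (leq_t _ (norm b ^ 2 / 2)). intros t ht.
    specialize (hc w r t ht). rewrite Ew hs in hc. cbn [ERplus ERscal ERle ERlt] in hc.
    specialize (hpr (vadd (vscal t w) (vscal (1 - t) r))). cbn [ERplus ERscal ERle ERlt] in hpr.
    rewrite hs in hpr.
    destruct (f (vadd (vscal t w) (vscal (1 - t) r))) as [fwt|]; cbn [ERplus ERscal ERle ERlt] in hc, hpr; [|contradiction].
    assert (e : vsub y (vadd (vscal t w) (vscal (1 - t) r)) = vsub a (vscal t b)) by (unfold a, b; vring).
    rewrite e in hpr. fold a in hpr. rewrite norm_sq_sub norm_scal inner_scalr Rabs_right in hpr; [|lra].
    assert (h1 : gam * fwt <= gam * (t * fw + (1 - t) * s)) by (apply Rmult_le_compat_l; lra).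
    assert (h2 : t * (gam * s - gam * fw + inner a b) <= t * (t * (norm b ^ 2 / 2))) by nra.
    apply Rmult_le_reg_l in h2; lra. }
  assert (inner b (vscal (/ gam) a) = / gam * inner a b) by (rewrite inner_scalr ax_inner_sym; auto).
  rewrite H.
  assert (gam * (s - fw + / gam * inner a b) <= 0) by (replace (gam * (s - fw + / gam * inner a b)) with (gam * s - gam * fw + inner a b) by (field; lra); lra).
  assert (s - fw + / gam * inner a b <= 0).
  { destruct (Rle_lt_dec (s - fw + / gam * inner a b) 0); auto. nra. }
  lra.
Qed.

Lemma prox_nonexp (V : HSpace) (f : V -> ERbar) (gam : R) y1 r1 y2 r2 s1 s2 :
  0 < gam -> subdiff f r1 (vscal (/ gam) (vsub y1 r1)) -> subdiff f r2 (vscal (/ gam) (vsub y2 r2)) ->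
  f r1 = Fin s1 -> f r2 = Fin s2 -> norm (vsub r1 r2) <= norm (vsub y1 y2).
Proof.
  intros hg h1 h2 e1 e2. assert (hm := subdiff_mono V f _ _ _ _ _ _ h1 h2 e1 e2).
  assert (ev : vsub (vscal (/ gam) (vsub y1 r1)) (vscal (/ gam) (vsub y2 r2)) =
               vscal (/ gam) (vsub (vsub y1 y2) (vsub r1 r2))) by vring.
  rewrite ev inner_scalr inner_subr in hm.
  assert (hg' : 0 < / gam) by (apply Rinv_0_lt_compat; auto).
  assert (hx : 0 <= inner (vsub r1 r2) (vsub y1 y2) - inner (vsub r1 r2) (vsub r1 r2)).
  { destruct (Rle_lt_dec 0 (inner (vsub r1 r2) (vsub y1 y2) - inner (vsub r1 r2) (vsub r1 r2))); auto. nra. }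
  rewrite -norm_sq in hx. assert (hc := inner_le V (vsub r1 r2) (vsub y1 y2)).
  assert (n1 := norm_nonneg V (vsub r1 r2)). assert (n2 := norm_nonneg V (vsub y1 y2)).
  destruct (Req_dec (norm (vsub r1 r2)) 0) as [z|z]. lra.
  assert (norm (vsub r1 r2) * norm (vsub r1 r2) <= norm (vsub r1 r2) * norm (vsub y1 y2)) by nra.
  apply Rmult_le_reg_l in H; lra.
Qed.

Lemma weak_lsc (V : HSpace) (f : V -> ERbar) (v : nat -> V) (vb : V) (F : nat -> R) xi :
  lsc f -> convex f -> weak_cv v vb -> (forall k, ERle (f (v k)) (Fin (F k))) -> Un_cv F xi ->
  ERle (f vb) (Fin xi).
Proof.
  intros hl hc hw hF hcv.
  assert (heta : forall eta, xi < eta -> ERle (f vb) (Fin eta)).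
  { intros eta he.
    set (C := fun w => ERle (f w) (Fin eta)).
    destruct (hcv (eta - xi)) as [N hN]. lra.
    assert (hvC : forall k, (k >= N)%nat -> C (v k)).
    { intros k hk. specialize (hN k hk). unfold Rdist in hN. apply Rabs_def2 in hN.
      specialize (hF k). unfold C. destruct (f (v k)); cbn [ERplus ERscal ERle ERlt] in *; lra. }
    assert (hCc : closedS V C).
    { intros u l hu hul. unfold C. destruct (f l) as [fl|] eqn:El; simpl.
      - destruct (Rle_lt_dec fl eta); auto. exfalso.
        destruct (hl l eta) as [delta [hd hdl]]. rewrite El. cbn [ERplus ERscal ERle ERlt]. auto.
        destruct (hul delta hd) as [n hn]. specialize (hn n (le_n _)).
        unfold Rdist in hn. rewrite Rminus_0_r Rabs_right in hn; [|apply Rle_ge, norm_nonneg].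
        specialize (hdl _ hn). specialize (hu n). unfold C in hu. destruct (f (u n)); cbn [ERplus ERscal ERle ERlt] in *; lra.
      - destruct (hl l eta) as [delta [hd hdl]]. rewrite El. cbn [ERplus ERscal ERle ERlt]. auto.
        destruct (hul delta hd) as [n hn]. specialize (hn n (le_n _)).
        unfold Rdist in hn. rewrite Rminus_0_r Rabs_right in hn; [|apply Rle_ge, norm_nonneg].
        specialize (hdl _ hn). specialize (hu n). unfold C in hu. destruct (f (u n)); cbn [ERplus ERscal ERle ERlt] in *; lra. }
    assert (hCv : convexS V C).
    { intros a b t ha hb ht. unfold C in *.
      destruct (Req_dec t 0) as [e0|e0].
      { subst t. replace (vadd (vscal 0 a) (vscal (1 - 0) b)) with b by vring. auto. }
      destruct (Req_dec t 1) as [e1|e1].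
      { subst t. replace (vadd (vscal 1 a) (vscal (1 - 1) b)) with a by vring. auto. }
      specialize (hc a b t ltac:(lra)).
      destruct (f a) as [fa|]; destruct (f b) as [fb|]; cbn [ERplus ERscal ERle ERlt] in *; try contradiction.
      destruct (f (vadd (vscal t a) (vscal (1 - t) b))); cbn [ERplus ERscal ERle ERlt] in *; try contradiction. nra. }
    destruct (proj_exists V C vb (ex_intro _ (v N) (hvC N (le_n _))) hCc hCv) as [p [hp hpv]].
    assert (hle : inner (vsub vb p) (vsub vb p) <= 0).
    { apply cv_le_lim with (fun k => inner (vsub (v (k + N)%nat) p) (vsub vb p)).
      - intro k. rewrite ax_inner_sym. apply hpv. apply hvC. lia.
      - apply cv_ext with (fun k => inner (v (k + N)%nat) (vsub vb p) - inner p (vsub vb p)).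
        intro; vsimpl; ring. rewrite inner_subl.
        apply CV_minus; [|apply cv_const].
        assert (hh := hw (vsub vb p)). intros e0 he0. destruct (hh e0 he0) as [M hM]. exists M. intros n hn. apply hM. lia. }
    assert (vb = p). { assert (hh := inner_pos V (vsub vb p)). assert (inner (vsub vb p) (vsub vb p) = 0) by lra.
      apply inner_def in H. replace vb with (vadd (vsub vb p) p) by vring. rewrite H. vring. }
    subst. auto. }
  destruct (f vb) as [fv|] eqn:E; simpl.
  - apply Rnot_lt_le. intro hlt. specialize (heta ((fv + xi)/2) ltac:(lra)). cbn [ERplus ERscal ERle ERlt] in heta. lra.
  - specialize (heta (xi + 1) ltac:(lra)). cbn [ERplus ERscal ERle ERlt] in heta. auto.
Qed.

Lemma minty (V : HSpace) (f : V -> ERbar) (B : V -> V) (chi : R) (xb : V) (fx : R) :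
  convex f -> (forall x y, norm (vsub (B x) (B y)) <= chi * norm (vsub x y)) ->
  f xb = Fin fx ->
  (forall w s, f w = Fin s -> s >= fx + inner (vsub xb w) (B w)) ->
  subdiff f xb (vopp (B xb)).
Proof.
  intros hc hB hx hw y. rewrite hx. destruct (f y) as [fy|] eqn:Ey; cbn [ERplus ERscal ERle ERlt]; auto.
  set (b := vsub y xb).
  assert (key : fx - fy + inner b (vopp (B xb)) <= 0).
  { apply (leq_t _ (chi * norm b ^ 2)). intros t ht.
    specialize (hc y xb t ht). rewrite Ey hx in hc. cbn [ERplus ERscal ERle ERlt] in hc.
    set (wt := vadd (vscal t y) (vscal (1 - t) xb)) in *.
    destruct (f wt) as [fwt|] eqn:Ewt; cbn [ERplus ERscal ERle ERlt] in hc; [|contradiction].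
    specialize (hw wt fwt Ewt).
    assert (e1 : vsub xb wt = vscal (- t) b) by (unfold wt, b; vring).
    assert (e2 : vsub wt xb = vscal t b) by (unfold wt, b; vring).
    rewrite e1 inner_scall in hw.
    assert (hl := hB wt xb). rewrite e2 norm_scal Rabs_right in hl; [|lra].
    assert (hci := inner_le V b (vsub (B wt) (B xb))).
    assert (hb0 := norm_nonneg V b).
    assert (hbb : inner b (B wt) <= inner b (B xb) + chi * (t * norm b) * norm b).
    { assert (inner b (B wt) = inner b (B xb) + inner b (vsub (B wt) (B xb))) by (vsimpl; ring).
      assert (norm b * norm (vsub (B wt) (B xb)) <= norm b * (chi * (t * norm b))) by (apply Rmult_le_compat_l; lra).
      nra. }
    rewrite inner_oppr.
    assert (h3 : t * (fx - fy - inner b (B xb)) <= t * (t * (chi * norm b ^ 2))) by nra.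
    apply Rmult_le_reg_l in h3; lra. }
  rewrite ax_inner_sym in key. fold b. rewrite ax_inner_sym. lra.
Qed.


Fixpoint psum (e : nat -> R) (n : nat) : R :=
  match n with O => 0 | S n => psum e n + e n end.

Lemma psum_sum (e : nat -> R) n : psum e (S n) = sum_f_R0 e n.
Proof. induction n. simpl. ring. simpl in *. rewrite IHn. reflexivity. Qed.

Lemma growing_ub_cv (u : nat -> R) M : (forall n, u n <= u (S n)) -> (forall n, u n <= M) -> exists l, Un_cv u l.
Proof.
  intros h1 h2. destruct (growing_cv u h1) as [l hl]. exists M. intros x [i ->]. auto. exists l; auto.
Qed.

Lemma psum_cv (e : nat -> R) M : (forall n, 0 <= e n) -> (forall n, psum e n <= M) ->
  exists l, Un_cv (psum e) l.
Proof. intros h0 hM. apply growing_ub_cv with M; auto. intro n. simpl. specialize (h0 n). lra. Qed.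

Lemma summable_to0 (e : nat -> R) M : (forall n, 0 <= e n) -> (forall n, psum e n <= M) -> Un_cv e 0.
Proof.
  intros h0 hM. destruct (psum_cv e M h0 hM) as [l hl].
  apply cv_ext with (fun n => psum e (S n) - psum e n). intro; simpl; ring.
  replace 0 with (l - l) by ring. apply CV_minus; auto. apply cv_shift; auto.
Qed.

Lemma quasi_fejer (al e : nat -> R) M : (forall n, 0 <= e n) -> (forall n, psum e n <= M) ->
  (forall n, 0 <= al n) -> (forall n, al (S n) <= al n + e n) -> exists l, Un_cv al l.
Proof.
  intros he hM hal hs.
  destruct (psum_cv e M he hM) as [ls hls].
  destruct (growing_ub_cv (fun n => psum e n - al n) M) as [lb hlb].
  - intro n. simpl. specialize (hs n). lra.
  - intro n. specialize (hM n). specialize (hal n). lra.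
  exists (ls - lb). apply cv_ext with (fun n => psum e n - (psum e n - al n)). intro; ring.
  apply CV_minus; auto.
Qed.

Lemma fejer_bound (al e : nat -> R) : (forall n, al (S n) <= al n + e n) -> forall n, al n <= al O + psum e n.
Proof. intros hs n. induction n. simpl. lra. simpl. specialize (hs n). lra. Qed.

Lemma sq_to0 (t : nat -> R) : (forall n, 0 <= t n) -> Un_cv (fun n => t n ^ 2) 0 -> Un_cv t 0.
Proof.
  intros h0 h eps he. destruct (h (eps ^ 2) ltac:(nra)) as [N hN]. exists N. intros n hn.
  specialize (hN n hn). specialize (h0 n). unfold Rdist in *. rewrite Rminus_0_r in hN |- *.
  rewrite Rabs_right in hN; [|apply Rle_ge; nra]. rewrite Rabs_right; [|lra].
  apply sq_lt_lt; lra.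
Qed.

Lemma abs_summable_psum (V : RawIP) (a : nat -> V) : abs_summable a ->
  exists M, forall n, psum (fun k => norm (a k)) n <= M.
Proof.
  intros [M hM]. exists (Rmax M 0). intro n. destruct n. simpl. apply Rmax_r.
  rewrite psum_sum. eapply Rle_trans. apply hM. apply Rmax_l.
Qed.


Definition monoB (V : HSpace) (B : V -> V) := forall x y, 0 <= inner (vsub x y) (vsub (B x) (B y)).
Definition lipB (V : HSpace) (B : V -> V) chi := forall x y, norm (vsub (B x) (B y)) <= chi * norm (vsub x y).

Lemma tseng_step (V : HSpace) (f : V -> ERbar) (B : V -> V) chi eps gam (w a b c p w' z y r : V) :
  proper f -> convex f -> monoB V B -> lipB V B chi -> 0 < chi -> 0 < eps < 1 / (chi + 1) ->
  eps <= gam <= (1 - eps) / chi ->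
  subdiff f z (vopp (B z)) ->
  y = vsub w (vscal gam (vadd (B w) a)) -> r = vsub p b ->
  is_prox (fun z => ERscal gam (f z)) y r ->
  w' = vadd (vsub w y) (vsub p (vscal gam (vadd (B p) c))) ->
  norm (vsub (vadd r (vscal gam (vsub (B w) (B r)))) z) ^ 2 + eps * norm (vsub w r) ^ 2
     <= (norm (vsub w z) + (2 / chi + 2) * (norm a + norm b + norm c)) ^ 2
  /\ norm (vsub w' (vadd r (vscal gam (vsub (B w) (B r))))) <= (2 / chi + 2) * (norm a + norm b + norm c)
  /\ norm (vsub r z) <= 2 * norm (vsub w z) + (2 / chi + 2) * (norm a + norm b + norm c).
Proof.
  intros hp hc hmono hlip hchi heps hgam hz hy hr hprox hw'.
  set (K := 2 / chi + 2). set (E := K * (norm a + norm b + norm c)).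
  assert (hg0 : 0 < gam) by lra.
  assert (hgc : gam * chi <= 1 - eps).
  { destruct hgam as [_ h]. apply Rmult_le_reg_r with (/ chi). apply Rinv_0_lt_compat; lra.
    replace (gam * chi * / chi) with gam by (field; lra). exact h. }
  assert (he1 : eps < 1).
  { destruct heps as [_ h]. assert (eps * (chi + 1) < 1).
    { apply Rmult_lt_reg_r with (/ (chi + 1)). apply Rinv_0_lt_compat; lra.
      replace (eps * (chi + 1) * / (chi + 1)) with eps by (field; lra). lra. } nra. }
  assert (hgK : 2 * gam <= K).
  { unfold K. assert (gam <= 1 / chi).
    { apply Rmult_le_reg_r with chi. lra. replace (1 / chi * chi) with 1 by (field; lra). lra. }
    unfold Rdiv in *. lra. }
  assert (hK0 : 0 < K) by (unfold K; assert (0 < 2 / chi) by (apply Rdiv_lt_0_compat; lra); lra).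
  assert (na := norm_nonneg V a). assert (nb := norm_nonneg V b). assert (nc := norm_nonneg V c).
  assert (hEa : 2 * gam * norm a <= E).
  { unfold E. assert (2 * gam * norm a <= K * norm a) by (apply Rmult_le_compat_r; lra). nra. }
  destruct (prox_subdiff V f gam y r hg0 hp hc hprox) as [[s hs] hu].
  set (u := vscal (/ gam) (vsub y r)) in *.
  destruct (subdiff_fin V f z _ r s hz hs) as [sz hsz].
  (* z is a fixed point *)
  set (yz := vsub z (vscal gam (B z))).
  assert (hz' : subdiff f z (vscal (/ gam) (vsub yz z))).
  { replace (vscal (/ gam) (vsub yz z)) with (vopp (B z)); auto.
    apply vext. intro t. unfold yz. vsimpl. field. lra. }
  assert (hrz : norm (vsub r z) <= norm (vsub y yz)) by (apply (prox_nonexp V f gam y r yz z s sz); auto).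
  set (al := norm (vsub w z)).
  assert (hal : 0 <= al) by apply norm_nonneg.
  assert (hyyz : norm (vsub y yz) <= 2 * al + gam * norm a).
  { assert (ev : vsub y yz = vsub (vsub (vsub w z) (vscal gam (vsub (B w) (B z)))) (vscal gam a))
      by (rewrite hy; unfold yz; vring).
    rewrite ev. eapply Rle_trans. apply norm_sub_le. eapply Rle_trans. apply Rplus_le_compat_r. apply norm_sub_le.
    rewrite !norm_scal !Rabs_right; try lra.
    assert (hl := hlip w z). fold al in hl.
    assert (gam * norm (vsub (B w) (B z)) <= gam * (chi * al)) by (apply Rmult_le_compat_l; lra).
    assert (0 <= (1 - eps - gam * chi) * al) by (apply Rmult_le_pos; lra).
    assert (0 <= eps * al) by (apply Rmult_le_pos; lra). fold al. lra. }
  split; [|split].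
  3: { unfold E. assert (gam * norm a <= K * norm a) by (apply Rmult_le_compat_r; lra).
       assert (0 <= K * norm b) by (apply Rmult_le_pos; lra). assert (0 <= K * norm c) by (apply Rmult_le_pos; lra). lra. }
  - set (A0 := vsub r z). set (Dd := vsub w r). set (G := vsub (B w) (B r)). set (U := vadd u (B r)).
    assert (e1 : vsub (vadd r (vscal gam G)) z = vadd A0 (vscal gam G)) by (unfold A0; vring).
    assert (e2 : vsub w z = vadd Dd A0) by (unfold Dd, A0; vring).
    assert (e3 : Dd = vscal gam (vadd (vadd U G) a)).
    { unfold Dd, U, G, u. apply vext. intro t. rewrite hy. vsimpl. field. lra. }
    assert (e4 : U = vadd (vsub u (vopp (B z))) (vsub (B r) (B z))) by (unfold U; vring).
    assert (m1 : 0 <= inner A0 (vsub u (vopp (B z)))) by (apply (subdiff_mono V f r u z (vopp (B z)) s sz); auto).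
    assert (m2 : 0 <= inner A0 (vsub (B r) (B z))) by apply hmono.
    assert (hAU : 0 <= inner A0 U) by (rewrite e4 inner_addr; lra).
    assert (hG : norm G <= chi * norm Dd) by apply hlip.
    assert (hAa : inner A0 a <= norm A0 * norm a) by apply inner_le.
    assert (hA : norm A0 <= 2 * al + gam * norm a) by (unfold A0; lra).
    clearbody A0 Dd G U.
    assert (nA := norm_nonneg V A0). assert (nD := norm_nonneg V Dd). assert (nG := norm_nonneg V G).
    rewrite e1 norm_sq_add norm_scal inner_scalr Rabs_right; [|lra].
    assert (hal2 : al ^ 2 = norm Dd ^ 2 + 2 * inner Dd A0 + norm A0 ^ 2) by (unfold al; rewrite e2 norm_sq_add; auto).
    assert (hDA : inner Dd A0 = gam * (inner A0 U + inner A0 G + inner A0 a)).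
    { rewrite {1}e3 inner_scall !inner_addl (ax_inner_sym V U) (ax_inner_sym V G) (ax_inner_sym V a). auto. }
    assert (hGG : norm G ^ 2 <= chi ^ 2 * norm Dd ^ 2) by (rewrite -Rpow_mult_distr; apply pow_incr; lra).
    assert (hgc2 : gam ^ 2 * chi ^ 2 <= 1 - eps).
    { assert (0 <= gam * chi) by (apply Rmult_le_pos; lra). rewrite -Rpow_mult_distr.
      assert ((gam * chi) ^ 2 <= (1 - eps) ^ 2) by (apply pow_incr; lra). nra. }
    assert (hfin : norm A0 ^ 2 + 2 * (gam * inner A0 G) + gam ^ 2 * norm G ^ 2 + eps * norm Dd ^ 2
                   <= al ^ 2 + 2 * gam * norm A0 * norm a).
    { assert (h1 : gam ^ 2 * norm G ^ 2 <= gam ^ 2 * (chi ^ 2 * norm Dd ^ 2)) by (apply Rmult_le_compat_l; nra).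
      assert (h2 : gam ^ 2 * chi ^ 2 * norm Dd ^ 2 <= (1 - eps) * norm Dd ^ 2) by (apply Rmult_le_compat_r; nra).
      assert (h3 : 0 <= gam * inner A0 U) by (apply Rmult_le_pos; lra).
      assert (h4 := inner_ge V A0 a).
      assert (h5 : gam * (- (norm A0 * norm a)) <= gam * inner A0 a) by (apply Rmult_le_compat_l; lra).
      rewrite hal2 hDA. lra. }
    assert (2 * gam * norm A0 * norm a <= 2 * gam * norm a * (2 * al + gam * norm a)).
    { assert (0 <= 2 * gam * norm a) by nra. nra. }
    assert (hE0 : 0 <= E) by (unfold E; apply Rmult_le_pos; lra).
    assert (k1 : 2 * gam * norm a * al <= E * al) by (apply Rmult_le_compat_r; lra).
    assert (k2 : (2 * gam * norm a) ^ 2 <= E ^ 2) by (apply pow_incr; nra).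
    nra.
  - rewrite hw'.
    assert (ev : vsub (vadd (vsub w y) (vsub p (vscal gam (vadd (B p) c)))) (vadd r (vscal gam (vsub (B w) (B r))))
                 = vadd (vadd (vscal gam a) (vscal gam (vopp c))) (vadd b (vscal gam (vsub (B r) (B p))))).
    { rewrite hy hr. vring. }
    rewrite ev.
    assert (hrp : norm (vsub r p) = norm b) by (apply norm_eq_inner; rewrite hr; vsimpl; ring).
    assert (hl := hlip r p). rewrite hrp in hl.
    eapply Rle_trans. apply norm_triangle. eapply Rle_trans. apply Rplus_le_compat; apply norm_triangle.
    rewrite !norm_scal norm_opp !Rabs_right; try lra.
    assert (gam * norm (vsub (B r) (B p)) <= gam * (chi * norm b)) by (apply Rmult_le_compat_l; lra).
    assert (gam * (chi * norm b) <= norm b) by nra.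
    unfold E. assert (gam * norm a <= K * norm a) by (apply Rmult_le_compat_r; lra).
    assert (gam * norm c <= K * norm c) by (apply Rmult_le_compat_r; lra).
    assert (2 * norm b <= K * norm b) by (apply Rmult_le_compat_r; [lra|]; unfold K; assert (0 < 2 / chi) by (apply Rdiv_lt_0_compat; lra); lra).
    lra.
Qed.


Definition finp (e : ERbar) : R := match e with Fin s => s | PInf => 0 end.

Lemma psum_le (e1 e2 : nat -> R) n : (forall k, e1 k <= e2 k) -> psum e1 n <= psum e2 n.
Proof. intro h. induction n; simpl. lra. specialize (h n). lra. Qed.

Lemma psum_lin3 (e1 e2 e3 : nat -> R) K n :
  psum (fun k => K * (e1 k + e2 k + e3 k)) n = K * (psum e1 n + psum e2 n + psum e3 n).
Proof. induction n; simpl. ring. rewrite IHn. ring. Qed.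

Lemma psum_scal (e : nat -> R) K n : psum (fun k => K * e k) n = K * psum e n.
Proof. induction n; simpl. ring. rewrite IHn. ring. Qed.

Lemma psum_nonneg (e : nat -> R) n : (forall k, 0 <= e k) -> 0 <= psum e n.
Proof. intro h. induction n; simpl. lra. specialize (h n). lra. Qed.

Lemma term_le_psum (e : nat -> R) n : (forall k, 0 <= e k) -> e n <= psum e (S n).
Proof. intro h. simpl. assert (hh := psum_nonneg e n h). lra. Qed.

Lemma cv_pow2 (u : nat -> R) l : Un_cv u l -> Un_cv (fun n => u n ^ 2) (l ^ 2).
Proof. intro h. apply cv_ext with (fun n => u n * u n). intro; ring. replace (l ^ 2) with (l * l) by ring. apply CV_mult; auto. Qed.

Theorem tseng (V : HSpace) (f : V -> ERbar) (B : V -> V) (chi eps : R) (gamma : nat -> R)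
  (a b c x p : nat -> V) :
  Gamma0 f -> monoB V B -> lipB V B chi -> (exists z, subdiff f z (vopp (B z))) ->
  0 < chi -> 0 < eps < 1 / (chi + 1) -> (forall n, eps <= gamma n <= (1 - eps) / chi) ->
  abs_summable a -> abs_summable b -> abs_summable c ->
  (forall n, is_prox (fun z => ERscal (gamma n) (f z)) (vsub (x n) (vscal (gamma n) (vadd (B (x n)) (a n))))
                     (vsub (p n) (b n)) /\
     x (S n) = vadd (vsub (x n) (vsub (x n) (vscal (gamma n) (vadd (B (x n)) (a n)))))
                    (vsub (p n) (vscal (gamma n) (vadd (B (p n)) (c n))))) ->
  exists xb, subdiff f xb (vopp (B xb)) /\ weak_cv x xb /\ weak_cv p xb.
Proof.
  intros [hprop [hlsc hconv]] hmono hlip [z0 hz0] hchi heps hgam ha hb hc hrec.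
  set (K := 2 / chi + 2).
  set (En := fun n => K * (norm (a n) + norm (b n) + norm (c n))).
  set (r := fun n => vsub (p n) (b n)).
  set (xh := fun n => vadd (r n) (vscal (gamma n) (vsub (B (x n)) (B (r n))))).
  assert (hK : 0 < K) by (unfold K; assert (0 < 2 / chi) by (apply Rdiv_lt_0_compat; lra); lra).
  assert (hE0 : forall n, 0 <= En n).
  { intro n. unfold En. assert (h1 := norm_nonneg V (a n)). assert (h2 := norm_nonneg V (b n)).
    assert (h3 := norm_nonneg V (c n)). apply Rmult_le_pos; lra. }
  destruct (abs_summable_psum V a ha) as [Ma hMa].
  destruct (abs_summable_psum V b hb) as [Mb hMb].
  destruct (abs_summable_psum V c hc) as [Mc hMc].
  assert (hEs : forall n, psum En n <= K * (Ma + Mb + Mc)).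
  { intro n. unfold En. rewrite psum_lin3. apply Rmult_le_compat_l. lra.
    specialize (hMa n). specialize (hMb n). specialize (hMc n). lra. }
  assert (hE2s : forall n, psum (fun k => 2 * En k) n <= 2 * (K * (Ma + Mb + Mc))).
  { intro n. rewrite psum_scal. specialize (hEs n). lra. }
  assert (hE20 : forall n, 0 <= 2 * En n) by (intro n; specialize (hE0 n); lra).
  assert (hEcv : Un_cv En 0) by (apply (summable_to0 En (K * (Ma + Mb + Mc))); auto).
  assert (hEb : forall n, En n <= K * (Ma + Mb + Mc)).
  { intro n. eapply Rle_trans. apply term_le_psum. auto. auto. }
  assert (hnb0 : forall n, 0 <= norm (b n)) by (intro; apply norm_nonneg).
  assert (hbcv : Un_cv (fun n => norm (b n)) 0) by (apply (summable_to0 _ Mb); auto).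
  assert (hna0 : forall n, 0 <= norm (a n)) by (intro; apply norm_nonneg).
  assert (hacv : Un_cv (fun n => norm (a n)) 0) by (apply (summable_to0 _ Ma); auto).
  assert (step : forall z n, subdiff f z (vopp (B z)) ->
     norm (vsub (xh n) z) ^ 2 + eps * norm (vsub (x n) (r n)) ^ 2 <= (norm (vsub (x n) z) + En n) ^ 2
  /\ norm (vsub (x (S n)) (xh n)) <= En n
  /\ norm (vsub (r n) z) <= 2 * norm (vsub (x n) z) + En n).
  { intros z n hz. destruct (hrec n) as [hp hx].
    apply (tseng_step V f B chi eps (gamma n) (x n) (a n) (b n) (c n) (p n) (x (S n)) z
           (vsub (x n) (vscal (gamma n) (vadd (B (x n)) (a n)))) (r n)); auto. }
  assert (hxh : forall z n, subdiff f z (vopp (B z)) -> norm (vsub (xh n) z) <= norm (vsub (x n) z) + En n).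
  { intros z n hz. destruct (step z n hz) as [h1 _]. apply sq_le_le.
    assert (hh := norm_nonneg V (vsub (x n) z)). specialize (hE0 n). lra.
    assert (0 <= eps * norm (vsub (x n) (r n)) ^ 2) by (apply Rmult_le_pos; [lra| apply pow2_ge_0]). lra. }
  assert (hfej : forall z n, subdiff f z (vopp (B z)) -> norm (vsub (x (S n)) z) <= norm (vsub (x n) z) + 2 * En n).
  { intros z n hz. assert (h1 := hxh z n hz). destruct (step z n hz) as [_ [h2 _]].
    assert (h3 := norm_sub_tri V (x (S n)) (xh n) z). lra. }
  assert (hcvz : forall z, subdiff f z (vopp (B z)) -> exists L, Un_cv (fun n => norm (vsub (x n) z)) L).
  { intros z hz. apply (quasi_fejer _ (fun k => 2 * En k) (2 * (K * (Ma + Mb + Mc)))); auto; intro; apply norm_nonneg.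
    }
  assert (hbdz : forall z, subdiff f z (vopp (B z)) -> forall n,
             norm (vsub (x n) z) <= norm (vsub (x O) z) + 2 * (K * (Ma + Mb + Mc))).
  { intros z hz n. assert (h := fejer_bound (fun n => norm (vsub (x n) z)) (fun k => 2 * En k)).
    specialize (h (fun k => hfej z k hz) n). simpl in h. specialize (hE2s n). lra. }
  set (Mx := norm (vsub (x O) z0) + 2 * (K * (Ma + Mb + Mc))).
  assert (hxr : Un_cv (fun n => norm (vsub (x n) (r n))) 0).
  { destruct (hcvz z0 hz0) as [L hL].
    assert (hbeta : Un_cv (fun n => norm (vsub (xh n) z0)) L).
    { apply cv_squeeze with (fun n => norm (vsub (x (S n)) z0) - En n) (fun n => norm (vsub (x (S n)) z0) + En n).
      - intro n. destruct (step z0 n hz0) as [_ [h2 _]].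
        assert (h3 := norm_sub_tri V (x (S n)) (xh n) z0).
        assert (h4 := norm_sub_tri V (xh n) (x (S n)) z0). rewrite (norm_sub_sym V (xh n) (x (S n))) in h4. lra.
      - replace L with (L - 0) by ring. apply CV_minus; auto. apply (cv_shift (fun n => norm (vsub (x n) z0))); auto.
      - replace L with (L + 0) by ring. apply CV_plus; auto. apply (cv_shift (fun n => norm (vsub (x n) z0))); auto. }
    apply sq_to0. intro; apply norm_nonneg.
    apply cv_squeeze0 with (fun n => / eps * ((norm (vsub (x n) z0) + En n) ^ 2 - norm (vsub (xh n) z0) ^ 2)).
    - intro n. split. apply pow2_ge_0. destruct (step z0 n hz0) as [h1 _].
      apply Rmult_le_reg_l with eps. lra. rewrite -Rmult_assoc Rinv_r; lra.
    - replace 0 with (/ eps * (L ^ 2 - L ^ 2)) by ring. apply cv_scal.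
      apply CV_minus; apply cv_pow2; auto.
      replace L with (L + 0) by ring. apply CV_plus; auto. }
  assert (hxp : Un_cv (fun n => norm (vsub (x n) (p n))) 0).
  { apply cv_squeeze0 with (fun n => norm (vsub (x n) (r n)) + norm (b n)).
    - intro n. split. apply norm_nonneg.
      replace (vsub (x n) (p n)) with (vsub (vsub (x n) (r n)) (b n)) by (unfold r; vring). apply norm_sub_le.
    - replace 0 with (0 + 0) by ring. apply CV_plus; auto. }
  assert (hxbd : forall n, norm (vsub (x n) z0) <= Mx) by (intro; apply hbdz; auto).
  assert (hrbd : forall n, norm (vsub (r n) z0) <= 2 * Mx + K * (Ma + Mb + Mc)).
  { intro n. destruct (step z0 n hz0) as [_ [_ h3]]. specialize (hxbd n). specialize (hEb n). lra. }
  assert (demi : forall phi xb, sincr phi -> weak_cv (fun k => x (phi k)) xb -> subdiff f xb (vopp (B xb))).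
  { intros phi xb hphi hw.
    assert (hwr : weak_cv (fun k => r (phi k)) xb).
    { apply weak_close with (fun k => x (phi k)); auto. apply (cv_subseq (fun n => norm (vsub (x n) (r n)))); auto. }
    assert (hps : forall n, (exists s, f (r n) = Fin s) /\ subdiff f (r n) (vscal (/ gamma n) (vsub (vsub (x n) (vscal (gamma n) (vadd (B (x n)) (a n)))) (r n)))).
    { intro n. destruct (hrec n) as [hp _]. apply prox_subdiff; auto. specialize (hgam n); lra. }
    set (u := fun n => vscal (/ gamma n) (vsub (vsub (x n) (vscal (gamma n) (vadd (B (x n)) (a n)))) (r n))).
    set (v := fun n => vadd (u n) (B (r n))).
    assert (hv : Un_cv (fun n => norm (v n)) 0).
    { apply cv_squeeze0 with (fun n => (/ eps + chi) * norm (vsub (x n) (r n)) + norm (a n)).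
      - intro n. split. apply norm_nonneg.
        assert (ev : v n = vsub (vsub (vscal (/ gamma n) (vsub (x n) (r n))) (vsub (B (x n)) (B (r n)))) (a n)).
        { unfold v, u. apply vext. intro t. vsimpl. field. specialize (hgam n). lra. }
        rewrite ev. eapply Rle_trans. apply norm_sub_le. eapply Rle_trans. apply Rplus_le_compat_r. apply norm_sub_le.
        rewrite norm_scal Rabs_right. 2: { specialize (hgam n). apply Rle_ge, Rlt_le, Rinv_0_lt_compat. lra. }
        assert (/ gamma n <= / eps) by (apply Rinv_le_contravar; specialize (hgam n); lra).
        assert (/ gamma n * norm (vsub (x n) (r n)) <= / eps * norm (vsub (x n) (r n))) by (apply Rmult_le_compat_r; [apply norm_nonneg|lra]).
        assert (hl := hlip (x n) (r n)). lra.
      - replace 0 with ((/ eps + chi) * 0 + 0) by ring. apply CV_plus; auto. apply cv_scal; auto. }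
    assert (hkey : forall w s n, f w = Fin s -> ERle (f (r n)) (Fin (s - inner (vsub w (r n)) (v n) + inner (vsub w (r n)) (B w)))).
    { intros w s n hws. destruct (hps n) as [[sr hsr] hsd]. rewrite hsr. simpl.
      assert (h1 := subdiff_ineq V f (r n) (u n) w sr s hsd hsr hws).
      assert (h2 := hmono (r n) w).
      assert (e1 : inner (vsub w (r n)) (u n) = inner (vsub w (r n)) (v n) - inner (vsub w (r n)) (B (r n))) by (unfold v; vsimpl; ring).
      assert (e2 : inner (vsub (r n) w) (vsub (B (r n)) (B w)) = - inner (vsub w (r n)) (B (r n)) + inner (vsub w (r n)) (B w)) by (vsimpl; ring).
      lra. }
    assert (hlim : forall w s, f w = Fin s -> ERle (f xb) (Fin (s + inner (vsub w xb) (B w)))).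
    { intros w s hws.
      apply (weak_lsc V f (fun k => r (phi k)) xb (fun k => s - inner (vsub w (r (phi k))) (v (phi k)) + inner (vsub w (r (phi k))) (B w))); auto.
      replace (s + inner (vsub w xb) (B w)) with (s - 0 + inner (vsub w xb) (B w)) by ring.
      apply CV_plus. apply CV_minus. apply cv_const.
        apply inner_bounded_0 with (norm (vsub w z0) + (2 * Mx + K * (Ma + Mb + Mc))).
        + intro k. replace (vsub w (r (phi k))) with (vsub (vsub w z0) (vsub (r (phi k)) z0)) by vring.
          eapply Rle_trans. apply norm_sub_le. apply Rplus_le_compat_l. apply hrbd.
        + apply (cv_subseq (fun n => norm (v n))); auto.
        + apply cv_ext with (fun k => inner w (B w) - inner (r (phi k)) (B w)). intro; vsimpl; ring.
          rewrite inner_subl. apply CV_minus. apply cv_const. apply hwr. }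
    destruct (proper_fin V f hprop) as [w0 [s0 hw0]].
    assert (hfx := hlim w0 s0 hw0). destruct (f xb) as [fx|] eqn:Efx; simpl in hfx; [|contradiction].
    apply (minty V f B chi xb fx); auto.
    intros w s hws. specialize (hlim w s hws). simpl in hlim.
    assert (inner (vsub xb w) (B w) = - inner (vsub w xb) (B w)) by (vsimpl; ring). lra. }
  assert (opial : forall phi1 phi2 z1 z2, sincr phi1 -> sincr phi2 ->
            weak_cv (fun k => x (phi1 k)) z1 -> weak_cv (fun k => x (phi2 k)) z2 ->
            subdiff f z1 (vopp (B z1)) -> subdiff f z2 (vopp (B z2)) -> z1 = z2).
  { intros phi1 phi2 z1 z2 hp1 hp2 hw1 hw2 hz1 hz2.
    destruct (hcvz z1 hz1) as [L1 hL1]. destruct (hcvz z2 hz2) as [L2 hL2].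
    set (lam := (inner z1 z1 - inner z2 z2 - (L1 ^ 2 - L2 ^ 2)) * / 2).
    assert (hcv : Un_cv (fun n => inner (x n) (vsub z1 z2)) lam).
    { apply cv_ext with (fun n => (inner z1 z1 - inner z2 z2 - (norm (vsub (x n) z1) ^ 2 - norm (vsub (x n) z2) ^ 2)) * / 2).
      intro n. rewrite !norm_sq. vsimpl. rewrite (ax_inner_sym V z1 (x n)) (ax_inner_sym V z2 (x n)). field.
      unfold lam. apply CV_mult; [|apply cv_const]. apply CV_minus. apply cv_const. apply CV_minus; apply cv_pow2; auto. }
    assert (h1 : inner z1 (vsub z1 z2) = lam).
    { apply (cv_unique (fun k => inner (x (phi1 k)) (vsub z1 z2))). apply hw1. apply (cv_subseq (fun n => inner (x n) (vsub z1 z2))); auto. }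
    assert (h2 : inner z2 (vsub z1 z2) = lam).
    { apply (cv_unique (fun k => inner (x (phi2 k)) (vsub z1 z2))). apply hw2. apply (cv_subseq (fun n => inner (x n) (vsub z1 z2))); auto. }
    assert (h3 : inner (vsub z1 z2) (vsub z1 z2) = 0) by (rewrite inner_subl; lra).
    apply inner_def in h3. replace z1 with (vadd (vsub z1 z2) z2) by vring. rewrite h3. vring. }
  assert (hxb : forall n, norm (x n) <= Mx + norm z0).
  { intro n. replace (x n) with (vadd (vsub (x n) z0) z0) by vring. eapply Rle_trans. apply norm_triangle. specialize (hxbd n). lra. }
  destruct (weak_compact V x _ hxb) as [phi0 [hphi0 [xb hxbw]]].
  assert (hzb := demi phi0 xb hphi0 hxbw).
  assert (hwx : weak_cv x xb).
  { intro w. apply NNPP. intro hn.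
    assert (hex : exists d, 0 < d /\ forall N, exists n, (N <= n)%nat /\ d <= Rabs (inner (x n) w - inner xb w)).
    { apply NNPP. intro hne. apply hn. intros e he. apply NNPP. intro hne2. apply hne. exists e. split; auto.
      intro N. apply NNPP. intro hne3. apply hne2. exists N. intros n hnN. apply Rnot_le_lt. intro hle. apply hne3. exists n. split; auto. }
    destruct hex as [d [hd hN]].
    destruct (build_seq (fun _ n => d <= Rabs (inner (x n) w - inner xb w))) as [th [hth hthP]].
    { intros N k. destruct (hN N) as [n [h1 h2]]. exists n. auto. }
    destruct (weak_compact V (fun k => x (th k)) _ (fun k => hxb (th k))) as [phi [hphi [xc hxc]]].
    assert (hcomp : sincr (fun k => th (phi k))) by (apply sincr_comp; auto).
    assert (hzc := demi _ xc hcomp hxc).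
    assert (xc = xb) by (apply (opial _ _ _ _ hcomp hphi0 hxc hxbw hzc hzb)).
    subst xc. destruct (hxc w d hd) as [N hN2]. specialize (hN2 N (le_n _)). specialize (hthP (phi N)).
    cbv beta in hN2. unfold Rdist in hN2. lra. }
  exists xb. split; auto. split; auto.
  apply weak_close with x; auto.
Qed.


From HB Require Import structures.
From mathcomp Require Import ssreflect ssrfun ssrbool eqtype ssrnat seq fintype bigop.
Open Scope R_scope.

Lemma Rplus_assoc_ssr : associative Rplus. Proof. intros x y z. ring. Qed.
HB.instance Definition RplusM := Monoid.isComLaw.Build R 0%R Rplus Rplus_assoc_ssr Rplus_comm Rplus_0_l.

Lemma sumI_add m (F G : 'I_m -> R) : sumI (fun i => F i + G i) = sumI F + sumI G.
Proof. unfold sumI. rewrite big_split. reflexivity. Qed.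

Lemma sumI_scal m (F : 'I_m -> R) a : sumI (fun i => a * F i) = a * sumI F.
Proof. unfold sumI. apply (big_rec2 (fun y1 y2 => y1 = a * y2)). ring. intros i y1 y2 _ ->. ring. Qed.

Lemma sumI_ext m (F G : 'I_m -> R) : (forall i, F i = G i) -> sumI F = sumI G.
Proof. intro h. unfold sumI. apply eq_bigr. auto. Qed.

Lemma sumI_nonneg m (F : 'I_m -> R) : (forall i, 0 <= F i) -> 0 <= sumI F.
Proof. intro h. unfold sumI. apply (big_rec (fun y => 0 <= y)). lra. intros i y _ hy. specialize (h i). lra. Qed.

Lemma sumI_le m (F G : 'I_m -> R) : (forall i, F i <= G i) -> sumI F <= sumI G.
Proof. intro h. unfold sumI. apply (big_rec2 (fun y1 y2 => y1 <= y2)). lra. intros i y1 y2 _ hy. specialize (h i). lra. Qed.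

Lemma sumI_single m (F : 'I_m -> R) i : (forall j, 0 <= F j) -> F i <= sumI F.
Proof.
  intro h. unfold sumI. rewrite (bigD1 i) //=.
  rewrite -{1}(Rplus_0_r (F i)). apply Rplus_le_compat_l.
  apply (big_rec (fun y => 0 <= y)). lra. intros j y _ hy. specialize (h j). simpl. lra.
Qed.

Lemma sumI_only m (F : 'I_m -> R) i : (forall j, j != i -> F j = 0) -> sumI F = F i.
Proof.
  intro h. unfold sumI. rewrite (bigD1 i) //=. rewrite big1. ring. intros j hj. apply h. auto.
Qed.

Lemma sumI_sq_le m (F : 'I_m -> R) : (forall j, 0 <= F j) -> sumI (fun i => F i ^ 2) <= (sumI F) ^ 2.
Proof.
  intro h. unfold sumI.
  assert (K : 0 <= \big[Rplus/0]_(i < m) F i /\ \big[Rplus/0]_(i < m) F i ^ 2 <= (\big[Rplus/0]_(i < m) F i) ^ 2).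
  { apply (big_rec2 (fun y2 y1 => 0 <= y1 /\ y2 <= y1 ^ 2)). lra.
    intros i y1 y2 _ [h1 h2]. specialize (h i). split. lra. nra. }
  tauto.
Qed.

Lemma sumI_cv m (u : 'I_m -> nat -> R) (l : 'I_m -> R) :
  (forall i, Un_cv (u i) (l i)) -> Un_cv (fun n => sumI (fun i => u i n)) (sumI l).
Proof.
  intro h.
  set (fadd := fun (g1 g2 : nat -> R) n => g1 n + g2 n).
  assert (e : forall n, sumI (fun i => u i n) = (\big[fadd/(fun _ => 0)]_(i < m) u i) n).
  { intro n. unfold sumI. symmetry. apply (big_morph (fun g : nat -> R => g n)); [intros g1 g2; reflexivity | reflexivity]. }
  apply cv_ext with (fun n => (\big[fadd/(fun _ => 0)]_(i < m) u i) n). intro; rewrite e; auto.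
  unfold sumI. apply (big_rec2 (fun y1 y2 => Un_cv y2 y1)). apply cv_const.
  intros i y1 y2 _ hy. unfold fadd. apply CV_plus; auto.
Qed.

Lemma sum_f_sumI m (g : 'I_m -> nat -> R) N :
  sum_f_R0 (fun n => sumI (fun i => g i n)) N = sumI (fun i => sum_f_R0 (g i) N).
Proof.
  induction N. simpl. auto. simpl. rewrite IHN. rewrite -sumI_add. auto.
Qed.

Lemma sumI_zero m : sumI (fun _ : 'I_m => 0) = 0.
Proof. unfold sumI. apply (big_rec (fun y => y = 0)). auto. intros; subst; ring. Qed.

Lemma prod_norm_sq m (H : 'I_m -> HSpace) (x : prodH H) :
  norm x ^ 2 = sumI (fun i => norm (x i) ^ 2).
Proof.
  unfold norm at 1. rewrite pow2_sqrt.
  - apply sumI_ext. intro i. rewrite norm_sq. auto.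
  - simpl. apply sumI_nonneg. intro; apply inner_pos.
Qed.

Lemma prod_comp_le m (H : 'I_m -> HSpace) (x : prodH H) i : norm (x i) <= norm x.
Proof.
  apply sq_le_le. unfold norm; apply sqrt_pos.
  rewrite prod_norm_sq. apply (sumI_single _ (fun i => norm (x i) ^ 2)). intro; apply pow2_ge_0.
Qed.

Lemma prod_ax m (H : 'I_m -> HSpace) : hilbert_axioms (prodH H).
Proof.
  split; [|split; [|split; [|split; [|split; [|split; [|split; [|split; [|split; [|split; [|split; [|split; [|split]]]]]]]]]]]].
  - intros x y z. apply functional_extensionality_dep. intro i. simpl. apply ax_vaddA.
  - intros x y. apply functional_extensionality_dep. intro i. simpl. apply ax_vaddC.
  - intros x. apply functional_extensionality_dep. intro i. simpl. apply ax_vadd0.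
  - intros x. apply functional_extensionality_dep. intro i. simpl. apply ax_vaddN.
  - intros a x y. apply functional_extensionality_dep. intro i. simpl. apply (ax_scal_addr (H i)).
  - intros a b x. apply functional_extensionality_dep. intro i. simpl. vring.
  - intros a b x. apply functional_extensionality_dep. intro i. simpl. vring.
  - intros x. apply functional_extensionality_dep. intro i. simpl. vring.
  - intros x y. simpl. apply sumI_ext. intro; apply ax_inner_sym.
  - intros x y z. simpl. rewrite -sumI_add. apply sumI_ext. intro; apply inner_addl.
  - intros a x y. simpl. rewrite -sumI_scal. apply sumI_ext. intro; apply inner_scall.
  - intros x. simpl. apply sumI_nonneg. intro; apply inner_pos.
  - intros x hx. simpl in hx. apply functional_extensionality_dep. intro i. simpl. apply inner_def.
    assert (h := sumI_single _ (fun i => inner (x i) (x i)) i (fun j => inner_pos (H j) (x j))).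
    simpl in h. assert (hp := inner_pos (H i) (x i)). lra.
  - intros u hu.
    assert (ex : forall i, exists l : H i, Un_cv (fun n => norm (vsub (u n i) l)) 0).
    { intro i. apply ax_complete. intros eps he. destruct (hu eps he) as [N hN]. exists N.
      intros p q hp hq. eapply Rle_lt_trans; [|apply (hN p q)].
      apply (prod_comp_le m H (vsub (u p) (u q)) i). apply/leP; auto. apply/leP; auto. }
    assert (exl : exists l : prodH H, forall i, Un_cv (fun n => norm (vsub (u n i) (l i))) 0).
    { exists (fun i => proj1_sig (constructive_indefinite_description _ (ex i))). intro i.
      destruct (constructive_indefinite_description _ (ex i)) as [l hl]. simpl. auto. }
    destruct exl as [l hl]. exists l.
    apply sq_to0. intro; unfold norm; apply sqrt_pos.
    apply cv_ext with (fun n => sumI (fun i => norm (vsub (u n i) (l i)) ^ 2)).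
    { intro n. rewrite prod_norm_sq. auto. }
    assert (hs := sumI_cv m (fun i n => norm (vsub (u n i) (l i)) ^ 2) (fun _ => 0)).
    rewrite sumI_zero in hs. apply hs. intro i.
    replace 0 with (0 ^ 2) by ring. apply cv_pow2. auto.
Qed.


Lemma grad_ineq (V : HSpace) (phi : V -> ERbar) x u : convex phi -> has_gradient phi x u -> subdiff phi x u.
Proof.
  intros hc [r0 [hx hd]] y. rewrite hx. destruct (phi y) as [s|] eqn:Ey; simpl; auto.
  set (d := vsub y x).
  assert (nd := norm_nonneg V d).
  assert (key : forall e, 0 < e -> inner d u + r0 <= s + e * norm d).
  { intros e he. destruct (hd e he) as [del [hdel hh]].
    set (t := Rmin (1/2) (del / (2 * (norm d + 1)))).
    assert (ht : 0 < t < 1).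
    { unfold t. split. apply Rmin_pos. lra. apply Rdiv_lt_0_compat; lra. assert (hh1 := Rmin_l (1/2) (del / (2 * (norm d + 1)))). lra. }
    assert (htd : t * norm d < del).
    { assert (h1 : t <= del / (2 * (norm d + 1))) by apply Rmin_r.
      assert (t * norm d <= del / (2 * (norm d + 1)) * norm d) by (apply Rmult_le_compat_r; lra).
      assert (del / (2 * (norm d + 1)) * norm d < del).
      { apply Rmult_lt_reg_r with (2 * (norm d + 1)). lra.
        replace (del / (2 * (norm d + 1)) * norm d * (2 * (norm d + 1))) with (del * norm d) by (field; lra). nra. }
      lra. }
    assert (hnh : norm (vscal t d) < del) by (rewrite norm_scal Rabs_right; lra).
    destruct (hh _ hnh) as [s' [hs' hbnd]].
    specialize (hc y x t ht). rewrite Ey hx in hc. simpl in hc.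
    replace (vadd (vscal t y) (vscal (1 - t) x)) with (vadd x (vscal t d)) in hc by (unfold d; vring).
    rewrite hs' in hc. simpl in hc.
    rewrite inner_scall norm_scal (Rabs_right t) in hbnd; [|lra].
    apply Rabs_def2b in hbnd || idtac.
    assert (hb2 := Rle_abs (- (s' - r0 - t * inner d u))). rewrite Rabs_Ropp in hb2.
    assert (h3 : t * (inner d u + r0 - s - e * norm d) <= 0) by nra.
    assert (inner d u + r0 - s - e * norm d <= 0).
    { destruct (Rle_lt_dec (inner d u + r0 - s - e * norm d) 0); auto. nra. }
    lra. }
  apply Rminus_le. apply leq_eps. intros e he.
  specialize (key (e / (norm d + 1)) ltac:(apply Rdiv_lt_0_compat; lra)).
  assert (e / (norm d + 1) * norm d <= e).
  { apply Rmult_le_reg_r with (norm d + 1). lra.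
    replace (e / (norm d + 1) * norm d * (norm d + 1)) with (e * norm d) by (field; lra). nra. }
  rewrite ax_inner_sym in key. fold d. rewrite ax_inner_sym. lra.
Qed.

Lemma abs_summable_prod m (H : 'I_m -> HSpace) (a : nat -> prodH H) :
  (forall i, abs_summable (fun n => a n i)) -> abs_summable a.
Proof.
  intro h.
  assert (exM : exists M : 'I_m -> R, forall i N, sum_f_R0 (fun n => norm (a n i)) N <= M i).
  { exists (fun i => proj1_sig (constructive_indefinite_description _ (h i))). intros i N.
    destruct (constructive_indefinite_description _ (h i)) as [M hM]. simpl. auto. }
  destruct exM as [M hM]. exists (sumI M). intro N.
  eapply Rle_trans. apply sum_Rle with (Bn := fun n => sumI (fun i => norm (a n i))).
  - intros n _. apply sq_le_le. apply sumI_nonneg. intro; apply norm_nonneg.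
    rewrite prod_norm_sq. apply (sumI_sq_le _ (fun i => norm (a n i))). intro; apply norm_nonneg.
  - rewrite sum_f_sumI. apply sumI_le. intro i. apply hM.
Qed.

Lemma weak_comp m (H : 'I_m -> HSpace) (u : nat -> prodH H) (l : prodH H) i :
  weak_cv u l -> weak_cv (fun n => u n i) (l i).
Proof.
  intros hw z.
  set (Z := dfwith (fun j => (@vzero (H j))) z : prodH H).
  assert (hZ : forall w : prodH H, inner w Z = inner (w i) z).
  { intro w. change (sumI (fun j => inner (w j) (Z j)) = inner (w i) z).
    rewrite (sumI_only _ _ i). unfold Z. rewrite dfwith_in. auto.
    intros j hj. unfold Z. rewrite dfwith_out. apply inner_zeror. rewrite eq_sym. auto. }
  apply cv_ext with (fun n => inner (u n) Z). intro; apply hZ.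
  rewrite -hZ. apply hw.
Qed.

Lemma dfwith_self m (H : 'I_m -> HSpace) (x : prodH H) i : dfwith (x : forall j, H j) (x i) = x.
Proof.
  apply functional_extensionality_dep. intro j.
  destruct (eqVneq i j) as [e|ne]. subst. by rewrite dfwith_in. by rewrite dfwith_out.
Qed.


Theorem theorem3p3
  (m : nat) (Hm : (2 <= m)%nat) (H : 'I_m -> HSpace)
  (f : prodH H -> ERbar) (hf : Gamma0 f)
  (g : 'I_m -> prodH H -> ERbar)
  (grad : forall i : 'I_m, prodH H -> H i)
  (hg : forall (i : 'I_m) (x : prodH H),
      convex (fun v : H i => g i (dfwith (x : forall j, H j) v)) /\
      has_gradient (fun v : H i => g i (dfwith (x : forall j, H j) v)) (x i) (grad i x))
  (hmono : forall x y : prodH H,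
      0 <= sumI (fun i => inner (vsub (grad i x) (grad i y)) (vsub (x i) (y i))))
  (hz : exists z : prodH H, subdiff f z (fun i => vopp (grad i z)))
  (chi : R) (hchi : 0 < chi)
  (hlip : forall x y : prodH H,
      sumI (fun i => (norm (vsub (grad i x) (grad i y))) ^ 2)
      <= chi ^ 2 * sumI (fun i => (norm (vsub (x i) (y i))) ^ 2))
  (eps : R) (heps : 0 < eps < 1 / (chi + 1))
  (gamma : nat -> R) (hgamma : forall n, eps <= gamma n <= (1 - eps) / chi)
  (x0 : prodH H)
  (a b c : nat -> prodH H)
  (habs : forall i : 'I_m,
      abs_summable (fun n => a n i) /\ abs_summable (fun n => b n i) /\
      abs_summable (fun n => c n i))
  (x p : nat -> prodH H)
  (hx0 : x O = x0)
  (hrec : forall n : nat,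
      let y : prodH H :=
        fun i => vsub (x n i) (vscal (gamma n) (vadd (grad i (x n)) (a n i))) in
      let q : prodH H :=
        fun i => vsub (p n i) (vscal (gamma n) (vadd (grad i (p n)) (c n i))) in
      is_prox (fun z : prodH H => ERscal (gamma n) (f z)) y
              (fun i => vsub (p n i) (b n i))
      /\ x (S n) = (fun i => vadd (vsub (x n i) (y i)) (q i))) :
  exists xb : prodH H,
    solves_P f g xb /\
    forall i : 'I_m,
      weak_cv (fun n => x n i) (xb i) /\ weak_cv (fun n => p n i) (xb i).
Proof.
  set (PH := {| hs_raw := prodH H; hs_ax := prod_ax m H |}).
  set (Bf := (fun u : prodH H => (fun i => grad i u) : prodH H)).
  assert (hmB : monoB PH Bf).
  { intros u v. change (0 <= sumI (fun i => inner (vsub (u i) (v i)) (vsub (grad i u) (grad i v)))).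
    rewrite (sumI_ext _ _ (fun i => inner (vsub (grad i u) (grad i v)) (vsub (u i) (v i)))). apply hmono.
    intro; apply ax_inner_sym. }
  assert (hlB : lipB PH Bf chi).
  { intros u v. apply sq_le_le. apply Rmult_le_pos; [lra|apply norm_nonneg].
    rewrite Rpow_mult_distr.
    change (norm (V:=prodH H) (vsub (V:=prodH H) (Bf u) (Bf v)) ^ 2 <= chi ^ 2 * norm (V := prodH H) (vsub (V:=prodH H) u v) ^ 2).
    rewrite !prod_norm_sq. exact (hlip u v). }
  assert (hz' : exists z : PH, subdiff f z (vopp (Bf z))).
  { destruct hz as [z hz]. exists z. exact hz. }
  assert (ha : abs_summable (V:=PH) a) by (apply (abs_summable_prod m H a); intro i; apply (habs i)).
  assert (hb : abs_summable (V:=PH) b) by (apply (abs_summable_prod m H b); intro i; apply (habs i)).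
  assert (hc : abs_summable (V:=PH) c) by (apply (abs_summable_prod m H c); intro i; apply (habs i)).
  destruct (tseng PH f Bf chi eps gamma a b c x p hf hmB hlB hz' hchi heps hgamma ha hb hc (fun n => hrec n))
    as [xb [hsub [hwx hwp]]].
  exists xb. split.
  - intros i v. cbv beta. rewrite !dfwith_self.
    destruct (hg i xb) as [hcv hgr].
    assert (hgi := grad_ineq (H i) _ (xb i) (grad i xb) hcv hgr v). rewrite dfwith_self in hgi.
    assert (hfi := hsub (dfwith (xb : forall j, H j) v)).
    assert (ein : inner (r:=PH) (vsub (V:=PH) (dfwith (xb : forall j, H j) v) xb) (vopp (Bf xb))
                  = - inner (vsub v (xb i)) (grad i xb)).
    { change (sumI (fun j => inner (vsub (dfwith (xb : forall j, H j) v j) (xb j)) (vopp (grad j xb)))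
              = - inner (vsub v (xb i)) (grad i xb)).
      rewrite (sumI_only _ _ i). rewrite dfwith_in. rewrite inner_oppr. auto.
      intros j hj. rewrite dfwith_out. vsimpl; ring. rewrite eq_sym; auto. }
    rewrite ein in hfi.
    destruct (f xb) as [fx|]; destruct (g i xb) as [gx|]; destruct (f (dfwith (xb : forall j, H j) v)) as [fy|];
      destruct (g i (dfwith (xb : forall j, H j) v)) as [gy|]; cbn [ERplus ERle] in *; auto; try lra; try contradiction.
  - intro i. split; apply weak_comp; auto.
Qed.
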